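(* Every punctually computable function $f:[0,1]\to\mathbb{R}$ is uniformly punctually computable.
   Context: A sequence $(r_i)_{i\in\mathbb{N}}$ of rationals is a fast Cauchy sequence if $|r_i-r_{i+1}|<2^{-i}$ for all $i$. Names of points $x\in[0,1]$ are fast Cauchy sequences converging to $x$ consisting of dyadic rationals in $[0,1]$ (with the $i$-th term of the form $m/2^{i}$), so that the space of names is a compact, primitively recursively branching, totally disconnected space. A primitive recursive functional is one given by a primitive recursive scheme (built from basic functions by composition and primitive recursion) with an additional oracle function symbol interpreted as the name. A function $f:[0,1]\to\mathbb{R}$ is punctually computable if there is a primitive recursive functional $\Phi$ such that for every $x\in[0,1]$ and every name $\chi$ of $x$, $(\Phi^\chi(n))_{n\in\mathbb{N}}$ is a fast Cauchy sequence of rationals converging to $f(x)$. A function $f:[0,1]\to\mathbb{R}$ is uniformly punctually computable if there is a primitive recursive function which on input $i$ outputs (a code of) a polynomial $p_i$ with rational coefficients such that $\sup_{x\in[0,1]}|f(x)-p_i(x)|<2^{-i}$. *)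

(* Defs.v *)
From Stdlib Require Import Reals Lra List Arith Bool.
Import ListNotations.
Open Scope R_scope.
Local Open Scope bool_scope.

(** Untyped syntax; argument lists are [list nat], missing arguments read as 0
    (this changes nothing about the class of functions defined). *)
Inductive pr : Type :=
| PZero : pr
| PSucc : pr
| PProj : nat -> pr
| PComp : pr -> list pr -> pr
| PRec  : pr -> pr -> pr
| POrc  : pr.

Fixpoint pr_eval (o : nat -> nat) (p : pr) (args : list nat) {struct p} : nat :=
  match p with
  | PZero => 0%nat
  | PSucc => S (nth 0 args 0%nat)
  | PProj i => nth i args 0%nat
  | PComp f gs =>
      pr_eval o f ((fix evs (l : list pr) : list nat :=
                      match l with
                      | [] => []
                      | g :: l' => pr_eval o g args :: evs l'
                      end) gs)
  | PRec g h =>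
      let rest := tl args in
      (fix rec (k : nat) : nat :=
         match k with
         | 0%nat => pr_eval o g rest
         | S k' => pr_eval o h (k' :: rec k' :: rest)
         end) (nth 0 args 0%nat)
  | POrc => o (nth 0 args 0%nat)
  end.

Fixpoint oracle_free (p : pr) : bool :=
  match p with
  | PZero | PSucc | PProj _ => true
  | PComp f gs => oracle_free f &&
      (fix all_of (l : list pr) : bool :=
         match l with [] => true | g :: l' => oracle_free g && all_of l' end) gs
  | PRec g h => oracle_free g && oracle_free h
  | POrc => false
  end.

(* Cantor unpairing *)
Definition unpair (n : nat) : nat * nat :=
  let w := ((Nat.sqrt (8 * n + 1) - 1) / 2)%nat in
  let t := (w * (w + 1) / 2)%nat in
  let y := (n - t)%nat in
  ((w - y)%nat, y).

(* code of a rational: n = <a, <b, c>> codes (a - b)/(c + 1) *)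
Definition rat_of_code (n : nat) : R :=
  let (a, r) := unpair n in
  let (b, c) := unpair r in
  (INR a - INR b) / INR (S c).

(* code of a finite list of rationals: 0 codes [], S <h, t> codes h :: t *)
Fixpoint ratlist_of_code_fuel (fuel n : nat) : list R :=
  match fuel with
  | 0%nat => []
  | S fuel' =>
      match n with
      | 0%nat => []
      | S k => let (h, t) := unpair k in rat_of_code h :: ratlist_of_code_fuel fuel' t
      end
  end.

Definition ratlist_of_code (n : nat) : list R := ratlist_of_code_fuel n n.

(* polynomial with coefficient list [c0; c1; ...] (lowest degree first) *)
Definition poly_eval (cs : list R) (x : R) : R :=
  fold_right (fun c acc => c + x * acc) 0 cs.

Definition fast_cauchy (r : nat -> R) : Prop :=
  forall i : nat, Rabs (r i - r (S i)) < / 2 ^ i.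

Definition is_name (x : R) (m : nat -> nat) : Prop :=
  (forall i : nat, (m i <= 2 ^ i)%nat) /\
  fast_cauchy (fun i => INR (m i) / 2 ^ i) /\
  Un_cv (fun i => INR (m i) / 2 ^ i) x.

Definition punctually_computable (f : R -> R) : Prop :=
  exists Phi : pr,
    forall (x : R), 0 <= x <= 1 ->
    forall (m : nat -> nat), is_name x m ->
      fast_cauchy (fun n => rat_of_code (pr_eval m Phi [n])) /\
      Un_cv (fun n => rat_of_code (pr_eval m Phi [n])) (f x).

Definition uniformly_punctually_computable (f : R -> R) : Prop :=
  exists P : pr, oracle_free P = true /\
    forall i : nat,
      exists eps : R, eps < / 2 ^ i /\
        forall x : R, 0 <= x <= 1 ->
          Rabs (f x - poly_eval (ratlist_of_code (pr_eval (fun _ => 0%nat) P [i])) x) <= eps.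

(* Main.v *)
Require Import Defs.
From Stdlib Require Import Reals Lra Lia List Arith Bool ZArith.
Import ListNotations.

Module Part1.
Import ListNotations.
Local Open Scope nat_scope.

Definition pr_ind2 (P : pr -> Prop) (H0 : P PZero) (HS : P PSucc) (HP : forall i, P (PProj i))
  (HC : forall f gs, P f -> Forall P gs -> P (PComp f gs))
  (HR : forall g h, P g -> P h -> P (PRec g h)) (HO : P POrc) : forall p, P p :=
  fix F p := match p with
  | PZero => H0 | PSucc => HS | PProj i => HP i
  | PComp f gs => HC f gs (F f) ((fix G l := match l return Forall P l with
       | [] => Forall_nil _ | g :: l' => Forall_cons _ (F g) (G l') end) gs)
  | PRec g h => HR g h (F g) (F h)
  | POrc => HO end.

Lemma ev_comp o f gs args : pr_eval o (PComp f gs) args = pr_eval o f (map (fun g => pr_eval o g args) gs).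
Proof. reflexivity. Qed.

Fixpoint prec o g h (rest : list nat) (k : nat) : nat :=
  match k with 0 => pr_eval o g rest | S k' => pr_eval o h (k' :: prec o g h rest k' :: rest) end.

Lemma ev_rec o g h args : pr_eval o (PRec g h) args = prec o g h (tl args) (nth 0 args 0).
Proof. simpl. generalize (nth 0 args 0). induction n; simpl; congruence. Qed.

Lemma of_comp f gs : oracle_free (PComp f gs) = oracle_free f && forallb oracle_free gs.
Proof. reflexivity. Qed.

Lemma of_indep : forall p o o' l, oracle_free p = true -> pr_eval o p l = pr_eval o' p l.
Proof.
  induction p using pr_ind2; intros o o' l Hf; try reflexivity.
  - rewrite !ev_comp. rewrite of_comp in Hf. apply andb_prop in Hf as [Hf Hg].
    rewrite (IHp o o' _ Hf). f_equal. apply map_ext_in. intros g Hin.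
    rewrite Forall_forall in H. apply H; auto. rewrite forallb_forall in Hg; auto.
  - rewrite !ev_rec. simpl in Hf. apply andb_prop in Hf as [H1 H2].
    generalize (nth 0 l 0). induction n; simpl; auto. rewrite IHn. auto.
  - discriminate.
Qed.

End Part1.
Import Part1.

Module Part2.
Import ListNotations.
Local Open Scope nat_scope.

Definition o0 : nat -> nat := fun _ => 0.

Inductive ex := EVar (n : nat) | EZero | ESucc (e : ex) | ERec (b s bd : ex) | ECall (p : pr) (es : list ex).

Fixpoint den (env : list nat) (e : ex) : nat :=
  match e with
  | EVar n => nth n env 0
  | EZero => 0
  | ESucc e => S (den env e)
  | ERec b s bd => (fix rec k := match k with 0 => den env b | S k' => den (k' :: rec k' :: env) s end) (den env bd)
  | ECall p es => pr_eval o0 p (map (den env) es)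
  end.

Fixpoint drec env b s k := match k with 0 => den env b | S k' => den (k' :: drec env b s k' :: env) s end.

Lemma den_rec env b s bd : den env (ERec b s bd) = drec env b s (den env bd).
Proof. simpl. generalize (den env bd). induction n; simpl; congruence. Qed.

Fixpoint compile (n : nat) (e : ex) : pr :=
  match e with
  | EVar i => if i <? n then PProj i else PZero
  | EZero => PZero
  | ESucc e => PComp PSucc [compile n e]
  | ERec b s bd => PComp (PRec (compile n b) (compile (S (S n)) s)) (compile n bd :: map PProj (seq 0 n))
  | ECall p es => PComp p (map (compile n) es)
  end.

Definition pad n (env : list nat) := map (fun j => nth j env 0) (seq 0 n).

Lemma nth_pad j n env : nth j (pad n env) 0 = if j <? n then nth j env 0 else 0.
Proof.
  unfold pad. destruct (Nat.ltb_spec j n).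
  - rewrite nth_indep with (d' := (fun j => nth j env 0) 0) by (rewrite length_map, length_seq; auto).
    rewrite (map_nth (fun j => nth j env 0)), seq_nth; auto.
  - apply nth_overflow. rewrite length_map, length_seq; auto.
Qed.

Lemma length_pad n env : length (pad n env) = n.
Proof. unfold pad. rewrite length_map, length_seq. auto. Qed.

Lemma pad_ext n l l' : (forall j, j < n -> nth j l 0 = nth j l' 0) -> pad n l = pad n l'.
Proof. intros H. unfold pad. apply map_ext_in. intros a Ha. apply in_seq in Ha. apply H. lia. Qed.

Lemma pad_exact l : pad (length l) l = l.
Proof.
  apply nth_ext with (d := 0) (d' := 0). apply length_pad.
  intros j Hj. rewrite length_pad in Hj. rewrite nth_pad. destruct (Nat.ltb_spec j (length l)); lia || auto.
Qed.

Lemma pad_pad n env : pad n (pad n env) = pad n env.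
Proof. apply pad_ext. intros j Hj. rewrite nth_pad. destruct (Nat.ltb_spec j n); lia || auto. Qed.

Definition ex_ind2 (P : ex -> Prop) (HV : forall n, P (EVar n)) (HZ : P EZero) (HS : forall e, P e -> P (ESucc e))
  (HR : forall b s bd, P b -> P s -> P bd -> P (ERec b s bd))
  (HC : forall p es, Forall P es -> P (ECall p es)) : forall e, P e :=
  fix F e := match e with
  | EVar n => HV n | EZero => HZ | ESucc e => HS e (F e)
  | ERec b s bd => HR b s bd (F b) (F s) (F bd)
  | ECall p es => HC p es ((fix G l := match l return Forall P l with
       | [] => Forall_nil _ | g :: l' => Forall_cons _ (F g) (G l') end) es) end.

Lemma map_proj_seq n env : map (fun g => pr_eval o0 g env) (map PProj (seq 0 n)) = pad n env.
Proof. rewrite map_map. reflexivity. Qed.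

Theorem compile_ok : forall e n env, pr_eval o0 (compile n e) env = den (pad n env) e.
Proof.
  induction e using ex_ind2; intros m env.
  - simpl. rewrite nth_pad. destruct (n <? m); reflexivity.
  - reflexivity.
  - simpl compile. rewrite ev_comp. simpl. rewrite IHe. reflexivity.
  - simpl compile. rewrite ev_comp. simpl map. rewrite map_proj_seq. rewrite ev_rec.
    change (prec o0 (compile m e1) (compile (S (S m)) e2) (pad m env) (pr_eval o0 (compile m e3) env) = den (pad m env) (ERec e1 e2 e3)).
    rewrite den_rec, IHe3. generalize (den (pad m env) e3). induction n; simpl.
    + rewrite IHe1, pad_pad. reflexivity.
    + rewrite IHe2. rewrite IHn. f_equal.
      replace (S (S m)) with (length (n :: drec (pad m env) e1 e2 n :: pad m env)) by (simpl; rewrite length_pad; auto).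
      apply pad_exact.
  - simpl compile. rewrite ev_comp. simpl. f_equal. rewrite map_map. apply map_ext_in.
    intros a Ha. rewrite Forall_forall in H. apply H; auto.
Qed.

Fixpoint ex_of (e : ex) : bool :=
  match e with
  | EVar _ | EZero => true
  | ESucc e => ex_of e
  | ERec b s bd => ex_of b && ex_of s && ex_of bd
  | ECall p es => oracle_free p && forallb ex_of es
  end.

Lemma compile_of : forall e n, ex_of e = true -> oracle_free (compile n e) = true.
Proof.
  induction e using ex_ind2; intros m Hf; simpl in Hf.
  - simpl. destruct (n <? m); reflexivity.
  - reflexivity.
  - simpl. rewrite IHe; auto.
  - apply andb_prop in Hf as [Hf H3]. apply andb_prop in Hf as [H1 H2].
    cbn [compile]. rewrite of_comp. simpl. rewrite IHe1, IHe2, IHe3; auto. simpl.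
    rewrite forallb_forall. intros x Hx. apply in_map_iff in Hx as [? [<- _]]. reflexivity.
  - apply andb_prop in Hf as [H1 H2]. cbn [compile]. rewrite of_comp, H1. simpl.
    rewrite forallb_forall in *. intros x Hx. apply in_map_iff in Hx as [y [<- Hy]].
    rewrite Forall_forall in H. apply H; auto.
Qed.

End Part2.
Import Part2.

Module Part3.
Import ListNotations.
Local Open Scope nat_scope.

Definition n0 l := nth 0 l 0.
Definition n1 l := nth 1 l 0.

Lemma pad2_0 l : nth 0 (pad 2 l) 0 = n0 l. Proof. reflexivity. Qed.
Lemma pad2_1 l : nth 1 (pad 2 l) 0 = n1 l. Proof. reflexivity. Qed.

Definition ADD := compile 2 (ERec (EVar 0) (ESucc (EVar 1)) (EVar 1)).
Lemma ADD_sem l : pr_eval o0 ADD l = n0 l + n1 l.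
Proof. unfold ADD. rewrite compile_ok, den_rec. cbn [den]. rewrite pad2_1.
  induction (n1 l); cbn [drec den nth]; rewrite ?pad2_0; lia. Qed.

Definition PRED := compile 1 (ERec EZero (EVar 0) (EVar 0)).
Lemma PRED_sem l : pr_eval o0 PRED l = pred (n0 l).
Proof. unfold PRED. rewrite compile_ok, den_rec. cbn [den]. unfold n0. simpl. destruct (nth 0 l 0); reflexivity. Qed.

Definition SUB := compile 2 (ERec (EVar 0) (ECall PRED [EVar 1]) (EVar 1)).
Lemma SUB_sem l : pr_eval o0 SUB l = n0 l - n1 l.
Proof. unfold SUB. rewrite compile_ok, den_rec. cbn [den]. rewrite pad2_1.
  induction (n1 l); cbn [drec den map]; [unfold n0; simpl; lia|]. rewrite PRED_sem. unfold n0 at 1; cbn [nth]. rewrite IHn. lia. Qed.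

Definition MUL := compile 2 (ERec EZero (ECall ADD [EVar 1; EVar 2]) (EVar 1)).
Lemma MUL_sem l : pr_eval o0 MUL l = n0 l * n1 l.
Proof. unfold MUL. rewrite compile_ok, den_rec. cbn [den]. rewrite pad2_1.
  induction (n1 l); cbn [drec den map]; [lia|]. rewrite ADD_sem. unfold n0 at 1, n1 at 1; cbn [nth]. rewrite IHn, pad2_0. lia. Qed.

Definition POW := compile 2 (ERec (ESucc EZero) (ECall MUL [EVar 1; EVar 2]) (EVar 1)).
Lemma POW_sem l : pr_eval o0 POW l = n0 l ^ n1 l.
Proof. unfold POW. rewrite compile_ok, den_rec. cbn [den]. rewrite pad2_1.
  induction (n1 l); cbn [drec den map]; [simpl; lia|]. rewrite MUL_sem. unfold n0 at 1, n1 at 1; cbn [nth]. rewrite IHn, pad2_0. simpl; lia. Qed.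

Definition eadd a b := ECall ADD [a; b].
Definition esub a b := ECall SUB [a; b].
Definition emul a b := ECall MUL [a; b].
Definition epow a b := ECall POW [a; b].
Definition econst (c : nat) := Nat.iter c ESucc EZero.

Lemma den_add env a b : den env (eadd a b) = den env a + den env b.
Proof. unfold eadd. cbn [den map]. rewrite ADD_sem. reflexivity. Qed.
Lemma den_sub env a b : den env (esub a b) = den env a - den env b.
Proof. unfold esub. cbn [den map]. rewrite SUB_sem. reflexivity. Qed.
Lemma den_mul env a b : den env (emul a b) = den env a * den env b.
Proof. unfold emul. cbn [den map]. rewrite MUL_sem. reflexivity. Qed.
Lemma den_pow env a b : den env (epow a b) = den env a ^ den env b.
Proof. unfold epow. cbn [den map]. rewrite POW_sem. reflexivity. Qed.
Lemma den_const env c : den env (econst c) = c.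
Proof. induction c; simpl; auto. Qed.
Lemma den_var env i : den env (EVar i) = nth i env 0. Proof. reflexivity. Qed.
Lemma den_succ env a : den env (ESucc a) = S (den env a). Proof. reflexivity. Qed.

Definition leqb_n a b := 1 - (a - b).
Definition eleq a b := esub (econst 1) (esub a b).
Lemma den_leq env a b : den env (eleq a b) = if den env a <=? den env b then 1 else 0.
Proof. unfold eleq. rewrite !den_sub, den_const. destruct (Nat.leb_spec (den env a) (den env b)); lia. Qed.

Fixpoint sumN (f : nat -> nat) (n : nat) : nat := match n with 0 => 0 | S k => sumN f k + f k end.

Lemma sumN_ext f g n : (forall k, k < n -> f k = g k) -> sumN f n = sumN g n.
Proof. induction n; simpl; intros; auto. rewrite IHn, H; auto. Qed.

Lemma sum_ind_lt n q : sumN (fun t => if t <? q then 1 else 0) n = Nat.min n q.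
Proof. induction n; cbn [sumN]; [lia|]. rewrite IHn. destruct (Nat.ltb_spec n q); lia. Qed.

Definition DIV := compile 2 (ERec EZero (eadd (EVar 1) (eleq (emul (ESucc (EVar 0)) (EVar 3)) (EVar 2))) (EVar 0)).
Lemma DIV_sem l : 0 < n1 l -> pr_eval o0 DIV l = n0 l / n1 l.
Proof. intros Hy. unfold DIV. rewrite compile_ok, den_rec. cbn [den]. rewrite pad2_0.
  transitivity (sumN (fun t => if S t * n1 l <=? n0 l then 1 else 0) (n0 l)).
  - induction (n0 l) at 1 3; cbn [drec sumN]; auto. rewrite den_add, den_leq, den_mul. cbn [den nth]. rewrite IHn, pad2_0, pad2_1. reflexivity.
  - rewrite sumN_ext with (g := fun t => if t <? n0 l / n1 l then 1 else 0).
    + rewrite sum_ind_lt. apply Nat.min_r. apply Nat.div_le_upper_bound; [lia| nia].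
    + intros k _. destruct (Nat.leb_spec (S k * n1 l) (n0 l)); destruct (Nat.ltb_spec k (n0 l / n1 l)); auto.
      * exfalso. assert (S k <= n0 l / n1 l); [apply Nat.div_le_lower_bound; lia| lia].
      * exfalso. assert (S k * n1 l <= n1 l * (n0 l / n1 l)) by nia. pose proof (Nat.mul_div_le (n0 l) (n1 l)). lia.
Qed.
Definition ediv a b := ECall DIV [a; b].
Lemma den_div env a b : 0 < den env b -> den env (ediv a b) = den env a / den env b.
Proof. intros. unfold ediv. cbn [den map]. rewrite DIV_sem; auto. Qed.

End Part3.
Import Part3.

Module Part4.
Import ListNotations.
Local Open Scope nat_scope.

Fixpoint tri w := match w with 0 => 0 | S k => tri k + S k end.
Lemma tri2 w : 2 * tri w = w * (w + 1).
Proof. induction w; simpl tri; nia. Qed.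
Lemma tri_mono a b : a <= b -> tri a <= tri b.
Proof. induction 1; simpl; lia. Qed.
Lemma tri_ge w : w <= tri w.
Proof. induction w; simpl; lia. Qed.

Lemma unpair_char n : let w := fst (unpair n) + snd (unpair n) in
  tri w <= n < tri (S w) /\ snd (unpair n) = n - tri w.
Proof.
  unfold unpair. cbv zeta.
  set (s := Nat.sqrt (8 * n + 1)).
  pose proof (Nat.sqrt_spec (8 * n + 1) ltac:(lia)) as [H1 H2]. fold s in H1, H2.
  set (w := (s - 1) / 2).
  assert (Hw : 2 * w + 1 <= s <= 2 * w + 2).
  { assert (s >= 1) by nia. pose proof (Nat.div_mod (s - 1) 2 ltac:(lia)).
    pose proof (Nat.mod_upper_bound (s - 1) 2 ltac:(lia)). fold w in H0. lia. }
  assert (Ht : w * (w + 1) / 2 = tri w).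
  { rewrite <- tri2. rewrite Nat.mul_comm. apply Nat.div_mul. lia. }
  rewrite Ht. pose proof (tri2 w). pose proof (tri2 (S w)).
  assert (tri w <= n) by nia.
  assert (n < tri (S w)) by nia.
  simpl fst; simpl snd.
  replace (w - (n - tri w) + (n - tri w)) with w.
  2:{ simpl tri in *. lia. }
  auto.
Qed.

Definition cpair a b := tri (a + b) + b.

Lemma tri_unique w w' n : tri w <= n < tri (S w) -> tri w' <= n < tri (S w') -> w = w'.
Proof.
  intros [A B] [C D]. destruct (Nat.lt_trichotomy w w') as [H|[H|H]]; auto; exfalso.
  - assert (tri (S w) <= tri w') by (apply tri_mono; lia). lia.
  - assert (tri (S w') <= tri w) by (apply tri_mono; lia). lia.
Qed.

Lemma unpair_pair a b : unpair (cpair a b) = (a, b).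
Proof.
  destruct (unpair_char (cpair a b)) as [H1 H2].
  assert (E : fst (unpair (cpair a b)) + snd (unpair (cpair a b)) = a + b).
  { apply (tri_unique _ _ (cpair a b)); auto. unfold cpair. simpl tri. lia. }
  rewrite E in H2. assert (Hb : snd (unpair (cpair a b)) = b) by (rewrite H2; unfold cpair; lia).
  destruct (unpair (cpair a b)) as [x y]. simpl in *. f_equal; lia.
Qed.

Lemma unpair_le n : fst (unpair n) <= n /\ snd (unpair n) <= n.
Proof. destruct (unpair_char n) as [[H1 H2] H3]. pose proof (tri_ge (fst (unpair n) + snd (unpair n))). lia. Qed.

Definition TRI := compile 1 (ERec EZero (eadd (EVar 1) (ESucc (EVar 0))) (EVar 0)).
Lemma TRI_sem l : pr_eval o0 TRI l = tri (n0 l).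
Proof. unfold TRI. rewrite compile_ok, den_rec. cbn [den]. unfold n0. simpl nth at 1.
  induction (nth 0 l 0); cbn [drec tri]; auto. rewrite den_add. cbn [den nth]. rewrite IHn. reflexivity. Qed.
Definition etri a := ECall TRI [a].
Lemma den_tri env a : den env (etri a) = tri (den env a).
Proof. unfold etri. cbn [den map]. rewrite TRI_sem. reflexivity. Qed.

Definition PAIR := compile 2 (eadd (etri (eadd (EVar 0) (EVar 1))) (EVar 1)).
Lemma PAIR_sem l : pr_eval o0 PAIR l = cpair (n0 l) (n1 l).
Proof. unfold PAIR. rewrite compile_ok. rewrite den_add, den_tri, den_add. reflexivity. Qed.
Definition epair a b := ECall PAIR [a; b].
Lemma den_pair env a b : den env (epair a b) = cpair (den env a) (den env b).
Proof. unfold epair. cbn [den map]. rewrite PAIR_sem. reflexivity. Qed.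

Definition WCNT := compile 1 (ERec EZero (eadd (EVar 1) (eleq (etri (ESucc (EVar 0))) (EVar 2))) (EVar 0)).
Lemma WCNT_sem l : pr_eval o0 WCNT l = fst (unpair (n0 l)) + snd (unpair (n0 l)).
Proof. unfold WCNT. rewrite compile_ok, den_rec. cbn [den].
  set (n := n0 l). set (w := fst (unpair n) + snd (unpair n)).
  destruct (unpair_char n) as [[H1 H2] _]. fold w in H1, H2.
  transitivity (sumN (fun t => if tri (S t) <=? n then 1 else 0) n).
  - change (nth 0 (pad 1 l) 0) with n. induction n at 1 3; cbn [drec sumN]; auto.
    rewrite den_add, den_leq, den_tri. cbn [den nth]. match goal with IH : drec _ _ _ _ = _ |- _ => rewrite IH end. reflexivity.
  - rewrite sumN_ext with (g := fun t => if t <? w then 1 else 0).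
    + rewrite sum_ind_lt. apply Nat.min_r. pose proof (tri_ge w). lia.
    + intros k _. destruct (Nat.leb_spec (tri (S k)) n); destruct (Nat.ltb_spec k w); auto.
      * exfalso. assert (tri (S w) <= tri (S k)) by (apply tri_mono; lia). lia.
      * exfalso. assert (tri (S k) <= tri w) by (apply tri_mono; lia). lia.
Qed.
Definition UN2 := compile 1 (esub (EVar 0) (etri (ECall WCNT [EVar 0]))).
Definition UN1 := compile 1 (esub (ECall WCNT [EVar 0]) (ECall UN2 [EVar 0])).
Lemma UN2_sem l : pr_eval o0 UN2 l = snd (unpair (n0 l)).
Proof. unfold UN2. rewrite compile_ok, den_sub, den_tri. cbn [den map]. rewrite WCNT_sem.
  destruct (unpair_char (n0 l)) as [_ H]. rewrite H. reflexivity. Qed.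
Lemma UN1_sem l : pr_eval o0 UN1 l = fst (unpair (n0 l)).
Proof. unfold UN1. rewrite compile_ok, den_sub. cbn [den map]. rewrite WCNT_sem, UN2_sem.
  unfold n0; simpl. lia. Qed.
Definition eun1 a := ECall UN1 [a].
Definition eun2 a := ECall UN2 [a].
Lemma den_un1 env a : den env (eun1 a) = fst (unpair (den env a)).
Proof. unfold eun1. cbn [den map]. rewrite UN1_sem. reflexivity. Qed.
Lemma den_un2 env a : den env (eun2 a) = snd (unpair (den env a)).
Proof. unfold eun2. cbn [den map]. rewrite UN2_sem. reflexivity. Qed.

End Part4.
Import Part4.

Module Part5.
Import ListNotations.
Local Open Scope nat_scope.

Fixpoint mr (p : pr) : nat :=
  match p with
  | PZero => 0 | PSucc => 1 | PProj i => S i | POrc => 1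
  | PComp f gs => list_max (map mr gs)
  | PRec g h => max 1 (max (S (mr g)) (pred (mr h)))
  end.

Lemma in_le_list_max x l : In x l -> x <= list_max l.
Proof. intros H. pose proof (proj1 (list_max_le l (list_max l)) (le_n _)). rewrite Forall_forall in H0. auto. Qed.

Lemma nth_map_lt {A B} (F : A -> B) l j d x : j < length l -> nth j (map F l) d = F (nth j l x).
Proof. intros H. rewrite nth_indep with (d' := F x) by (rewrite length_map; auto). apply map_nth. Qed.

Definition agree K (l l' : list nat) := forall j, j < K -> nth j l 0 = nth j l' 0.

Lemma nth_tl j (l : list nat) : nth j (tl l) 0 = nth (S j) l 0.
Proof. destruct l; simpl; auto. destruct j; auto. Qed.

Lemma mr_ok : forall p o l l', agree (mr p) l l' -> pr_eval o p l = pr_eval o p l'.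
Proof.
  induction p using pr_ind2; intros o l l' Ha; unfold agree in Ha; cbn [mr] in Ha.
  - reflexivity.
  - simpl. rewrite Ha; auto.
  - simpl. apply Ha; auto.
  - rewrite !ev_comp. f_equal. apply map_ext_in. intros g Hg. rewrite Forall_forall in H.
    apply H; auto. intros j Hj. apply Ha. eapply Nat.lt_le_trans; [apply Hj|].
    apply in_le_list_max. apply in_map. auto.
  - rewrite !ev_rec. rewrite (Ha 0) by lia. generalize (nth 0 l' 0). induction n; simpl.
    + apply IHp1. intros j Hj. rewrite !nth_tl. apply Ha. lia.
    + rewrite IHn. apply IHp2. intros j Hj. destruct j as [|[|j]]; simpl; auto.
      rewrite !nth_tl. apply Ha. lia.
  - simpl. rewrite Ha; auto.
Qed.

Fixpoint okK K (p : pr) : bool :=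
  match p with
  | PZero | PSucc | POrc => true
  | PProj i => i <? K
  | PComp f gs => okK K f && forallb (okK K) gs
  | PRec g h => (S (mr g) <=? K) && okK K g && okK K h
  end.

Fixpoint need (p : pr) : nat :=
  match p with
  | PProj i => S i
  | PComp f gs => max (need f) (list_max (map need gs))
  | PRec g h => max (S (mr g)) (max (need g) (need h))
  | _ => 0
  end.

Lemma okK_need : forall p K, need p <= K -> okK K p = true.
Proof.
  induction p using pr_ind2; intros K Hn; cbn [need okK] in *; auto.
  - apply Nat.ltb_lt. lia.
  - rewrite IHp by lia. simpl. rewrite forallb_forall. intros g Hg. rewrite Forall_forall in H. apply H; auto.
    assert (need g <= list_max (map need gs)) by (apply in_le_list_max, in_map; auto).
    lia.
  - rewrite IHp1, IHp2 by lia. rewrite andb_true_r, andb_true_r. apply Nat.leb_le. lia.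
Qed.

Section Thread.
Variable K : nat.
Variable Q : pr.

Definition padt (ts : list pr) := map (fun j => nth j ts PZero) (seq 0 K).

Fixpoint TT (p : pr) : pr :=
  match p with
  | PZero => PZero | PSucc => PSucc | PProj i => PProj i
  | POrc => PComp Q [PProj 0; PProj K; PProj (S K)]
  | PComp f gs => PComp (TT f) (padt (map TT gs) ++ [PProj K; PProj (S K)])
  | PRec g h => PRec (PComp (TT g) (map PProj (seq 0 (K - 1)) ++ [PZero; PProj (K - 1); PProj K]))
                     (PComp (TT h) (map PProj (seq 0 K) ++ [PProj (S K); PProj (S (S K))]))
  end.

Lemma nth_padK j l a b : nth j (pad K l ++ [a; b]) 0 = if j <? K then nth j l 0 else if j =? K then a else if j =? S K then b else 0.
Proof.
  destruct (Nat.ltb_spec j K).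
  - rewrite app_nth1 by (rewrite length_pad; auto). rewrite nth_pad. destruct (Nat.ltb_spec j K); lia || auto.
  - rewrite app_nth2 by (rewrite length_pad; auto). rewrite length_pad.
    destruct (j - K) as [|[|t]] eqn:E; simpl.
    + replace j with K by lia. rewrite Nat.eqb_refl. auto.
    + replace j with (S K) by lia. rewrite Nat.eqb_refl. destruct (Nat.eqb_spec (S K) K); lia || auto.
    + destruct (Nat.eqb_spec j K); [lia|]. destruct (Nat.eqb_spec j (S K)); [lia|]. destruct t; auto.
Qed.

Lemma list_eq_nth (X Y : list nat) : length X = length Y -> (forall j, j < length X -> nth j X 0 = nth j Y 0) -> X = Y.
Proof. intros. apply nth_ext with (d := 0) (d' := 0); auto. Qed.

Lemma map_eval_proj o (L : list nat) n : map (fun t => pr_eval o t L) (map PProj (seq 0 n)) = pad n L.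
Proof. rewrite map_map. reflexivity. Qed.

Hypothesis HK : 2 <= K.

Lemma eq_padK L l a b : length L = S (S K) -> (forall j, j < K -> nth j L 0 = nth j l 0) ->
  nth K L 0 = a -> nth (S K) L 0 = b -> L = pad K l ++ [a; b].
Proof.
  intros Hl Hj Ha Hb. apply list_eq_nth. rewrite Hl, length_app, length_pad. simpl. lia.
  intros j Hj'. rewrite nth_padK. destruct (Nat.ltb_spec j K); auto.
  destruct (Nat.eqb_spec j K); subst; auto. destruct (Nat.eqb_spec j (S K)); subst; auto. lia.
Qed.

Theorem TT_ok : forall p, okK K p = true -> forall o l a b,
  pr_eval o (TT p) (pad K l ++ [a; b]) = pr_eval (fun j => pr_eval o Q [j; a; b]) p l.
Proof.
  induction p using pr_ind2; intros Hok o l a b; cbn [okK] in Hok.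
  - reflexivity.
  - simpl TT. cbn [pr_eval]. rewrite nth_padK. destruct (Nat.ltb_spec 0 K); [auto| lia].
  - simpl TT. cbn [pr_eval]. rewrite nth_padK. apply Nat.ltb_lt in Hok. rewrite (proj2 (Nat.ltb_lt _ _) Hok). auto.
  - apply andb_prop in Hok as [Hf Hg]. rewrite forallb_forall in Hg. rewrite Forall_forall in H.
    simpl TT. rewrite !ev_comp. rewrite map_app. cbn [map pr_eval]. rewrite !nth_padK.
    rewrite Nat.ltb_irrefl, Nat.eqb_refl. destruct (Nat.ltb_spec (S K) K); [lia|].
    destruct (Nat.eqb_spec (S K) K); [lia|]. rewrite Nat.eqb_refl.
    replace (map (fun g => pr_eval o g (pad K l ++ [a; b])) (padt (map TT gs)))
      with (pad K (map (fun g => pr_eval (fun j => pr_eval o Q [j; a; b]) g l) gs)).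
    + apply IHp; auto.
    + unfold padt, pad. rewrite map_map. apply map_ext_in. intros j _.
      destruct (Nat.ltb_spec j (length gs)).
      * rewrite (nth_map_lt _ _ _ _ PZero) by auto. rewrite (nth_map_lt _ _ _ _ PZero) by auto.
        symmetry. apply H; [apply nth_In; auto| apply Hg, nth_In; auto].
      * rewrite !nth_overflow by (rewrite length_map; lia). reflexivity.
  - apply andb_prop in Hok as [Hok Hh]. apply andb_prop in Hok as [Hm Hg]. apply Nat.leb_le in Hm.
    simpl TT. rewrite !ev_rec. rewrite nth_padK. destruct (Nat.ltb_spec 0 K); [|lia].
    set (L0 := pad K l ++ [a; b]).
    assert (HL0 : forall j, j < K -> nth j L0 0 = nth j l 0).
    { intros j Hj. unfold L0. rewrite nth_padK. destruct (Nat.ltb_spec j K); [auto|lia]. }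
    assert (HLa : nth K L0 0 = a). { unfold L0. rewrite nth_padK, Nat.ltb_irrefl, Nat.eqb_refl. auto. }
    assert (HLb : nth (S K) L0 0 = b). { unfold L0. rewrite nth_padK. destruct (Nat.ltb_spec (S K) K); [lia|].
      destruct (Nat.eqb_spec (S K) K); [lia|]. rewrite Nat.eqb_refl. auto. }
    assert (HLen : length L0 = S (S K)). { unfold L0. rewrite length_app, length_pad. simpl. lia. }
    clearbody L0.
    generalize (nth 0 l 0). induction n; cbn [prec].
    + rewrite ev_comp, map_app, map_eval_proj. cbn [map pr_eval].
      transitivity (pr_eval (fun j => pr_eval o Q [j; a; b]) p1 (pad (K - 1) (tl l))).
      * rewrite <- IHp1 by auto. f_equal. apply eq_padK.
        { rewrite length_app, length_pad. simpl. lia. }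
        { intros j Hj. destruct (Nat.ltb_spec j (K - 1)).
          - rewrite app_nth1 by (rewrite length_pad; lia). rewrite !nth_pad.
            destruct (Nat.ltb_spec j (K - 1)); [|lia]. rewrite !nth_tl. apply HL0. lia.
          - rewrite app_nth2 by (rewrite length_pad; lia). rewrite length_pad. replace (j - (K - 1)) with 0 by lia.
            simpl. rewrite nth_pad. destruct (Nat.ltb_spec j (K - 1)); [lia|auto]. }
        { rewrite app_nth2 by (rewrite length_pad; lia). rewrite length_pad. replace (K - (K - 1)) with 1 by lia.
          simpl. rewrite nth_tl. replace (S (K - 1)) with K by lia. auto. }
        { rewrite app_nth2 by (rewrite length_pad; lia). rewrite length_pad. replace (S K - (K - 1)) with 2 by lia.
          simpl. rewrite nth_tl. auto. }
      * apply mr_ok. intros j Hj. rewrite nth_pad. destruct (Nat.ltb_spec j (K - 1)); [auto|lia].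
    + rewrite ev_comp, map_app, map_eval_proj. rewrite IHn.
      set (X := prec _ p1 p2 (tl l) n).
      rewrite <- IHp2 by auto. f_equal. cbn [map pr_eval].
      replace (nth (S K) (n :: X :: tl L0) 0) with a.
      2:{ destruct K as [|[|K']]; [lia|lia|]. simpl. rewrite nth_tl. auto. }
      replace (nth (S (S K)) (n :: X :: tl L0) 0) with b.
      2:{ simpl. rewrite nth_tl. auto. }
      f_equal. apply pad_ext. intros j Hj. destruct j as [|[|t]]; simpl; auto.
      rewrite !nth_tl. apply HL0. lia.
  - simpl TT. rewrite ev_comp. cbn [map pr_eval]. rewrite !nth_padK.
    destruct (Nat.ltb_spec 0 K); [|lia]. rewrite Nat.ltb_irrefl, Nat.eqb_refl.
    destruct (Nat.ltb_spec (S K) K); [lia|]. destruct (Nat.eqb_spec (S K) K); [lia|]. rewrite Nat.eqb_refl. reflexivity.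
Qed.
End Thread.

End Part5.
Import Part5.

Module Part6.
Import ListNotations.
Local Open Scope nat_scope.

Lemma of_rec g h : oracle_free (PRec g h) = oracle_free g && oracle_free h. Proof. reflexivity. Qed.

Lemma TT_of K Q : oracle_free Q = true -> forall p, oracle_free (TT K Q p) = true.
Proof.
  intros HQ. induction p using pr_ind2; cbn [TT]; auto.
  - rewrite of_comp, IHp. simpl. rewrite forallb_app. apply andb_true_intro; split.
    + unfold padt. rewrite forallb_forall. intros x Hx. apply in_map_iff in Hx as [j [<- _]].
      destruct (Nat.ltb_spec j (length gs)).
      * rewrite (nth_map_lt _ _ _ _ PZero) by auto. rewrite Forall_forall in H. apply H, nth_In; auto.
      * rewrite nth_overflow by (rewrite length_map; lia). reflexivity.
    + reflexivity.
  - rewrite of_rec, !of_comp, IHp1, IHp2. simpl. rewrite !forallb_app. simpl.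
    rewrite !andb_true_r. apply andb_true_intro; split; rewrite forallb_forall; intros x Hx;
    apply in_map_iff in Hx as [j [<- _]]; reflexivity.
  - rewrite of_comp, HQ. reflexivity.
Qed.

Definition POW2 := compile 1 (epow (econst 2) (EVar 0)).
Lemma POW2_sem l : pr_eval o0 POW2 l = 2 ^ n0 l.
Proof. unfold POW2. rewrite compile_ok, den_pow, den_const. reflexivity. Qed.

Fixpoint M (p : pr) : pr :=
  match p with
  | PZero => PZero | PSucc => PSucc | PProj i => PProj i | POrc => POW2
  | PComp f gs => PComp ADD [PComp (M f) (map M gs);
       (fix SM l := match l with [] => PZero | g :: l' => PComp ADD [M g; SM l'] end) gs]
  | PRec g h => PRec (M g) (PComp ADD [M h; PProj 1])
  end.

Definition ev0 p l := pr_eval o0 p l.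

Lemma M_comp f gs l : ev0 (M (PComp f gs)) l =
  ev0 (M f) (map (fun g => ev0 (M g) l) gs) + list_sum (map (fun g => ev0 (M g) l) gs).
Proof.
  unfold ev0. cbn [M]. rewrite ev_comp. cbn [map]. rewrite ADD_sem. unfold n0, n1. cbn [nth].
  rewrite (ev_comp o0 (M f)). rewrite map_map. f_equal. induction gs; cbn [map list_sum]; auto.
  rewrite ev_comp. cbn [map]. rewrite ADD_sem. unfold n0, n1. cbn [nth]. rewrite IHgs. auto.
Qed.

Fixpoint RM g h rest k := match k with 0 => ev0 (M g) rest | S k' => ev0 (M h) (k' :: RM g h rest k' :: rest) + RM g h rest k' end.

Lemma M_rec g h l : ev0 (M (PRec g h)) l = RM g h (tl l) (nth 0 l 0).
Proof.
  unfold ev0. cbn [M]. rewrite ev_rec. induction (nth 0 l 0); cbn [prec RM]; auto.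
  rewrite ev_comp. cbn [map]. rewrite ADD_sem. unfold n0, n1. cbn [nth]. rewrite IHn. reflexivity.
Qed.

Definition le_list (l l' : list nat) := forall j, nth j l 0 <= nth j l' 0.
Definition bnd (o : nat -> nat) := forall j, o j <= 2 ^ j.

Lemma le_list_map {A} (F G : A -> nat) xs : (forall x, In x xs -> F x <= G x) -> le_list (map F xs) (map G xs).
Proof.
  intros H j. revert j. induction xs; intros j; simpl. { destruct j; auto. }
  destruct j; simpl; [apply H; simpl; auto| apply IHxs; intros; apply H; simpl; auto].
Qed.

Lemma le_list_tl l l' : le_list l l' -> le_list (tl l) (tl l').
Proof. intros H j. rewrite !nth_tl. apply H. Qed.

Lemma le_list_cons a b l l' : a <= b -> le_list l l' -> le_list (a :: l) (b :: l').
Proof. intros H1 H2 [|j]; simpl; auto. Qed.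

Lemma list_sum_le {A} (F G : A -> nat) xs : (forall x, In x xs -> F x <= G x) -> list_sum (map F xs) <= list_sum (map G xs).
Proof. induction xs; simpl; intros; auto. specialize (IHxs (fun x H' => H x (or_intror H'))). specialize (H a (or_introl eq_refl)). lia. Qed.

Lemma in_le_sum {A} (F : A -> nat) xs x : In x xs -> F x <= list_sum (map F xs).
Proof. induction xs; simpl; [tauto|]. intros [<-|H]; [lia|]. specialize (IHxs H). lia. Qed.

Lemma pow_ge n : n <= 2 ^ n.
Proof. pose proof (Nat.pow_gt_lin_r 2 n ltac:(lia)). lia. Qed.

Lemma RM_mono_rest g h rest rest' k :
  (forall l l', le_list l l' -> ev0 (M g) l <= ev0 (M g) l') ->
  (forall l l', le_list l l' -> ev0 (M h) l <= ev0 (M h) l') ->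
  le_list rest rest' -> RM g h rest k <= RM g h rest' k.
Proof.
  intros Hg Hh Hr. induction k; cbn [RM]; auto.
  pose proof (Hh (k :: RM g h rest k :: rest) (k :: RM g h rest' k :: rest')).
  assert (le_list (k :: RM g h rest k :: rest) (k :: RM g h rest' k :: rest')) by
    (apply le_list_cons; auto; apply le_list_cons; auto).
  specialize (H H0). lia.
Qed.

Lemma RM_mono_k g h rest k k' : k <= k' -> RM g h rest k <= RM g h rest k'.
Proof. induction 1; auto. cbn [RM]. lia. Qed.

Theorem M_ok : forall p,
  (forall l l', le_list l l' -> ev0 (M p) l <= ev0 (M p) l') /\
  (forall o1 o2 l l', bnd o1 -> bnd o2 -> le_list l l' ->
     (forall j, j <= ev0 (M p) l' -> o1 j = o2 j) ->
     pr_eval o1 p l = pr_eval o2 p l /\ pr_eval o1 p l <= ev0 (M p) l').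
Proof.
  induction p using pr_ind2.
  - split; [intros; unfold ev0; simpl; lia|]. intros; simpl; unfold ev0; simpl; lia.
  - split; [intros l l' H; unfold ev0; simpl; specialize (H 0); lia|].
    intros o1 o2 l l' _ _ H _. unfold ev0; simpl. specialize (H 0). lia.
  - split; [intros l l' H; unfold ev0; simpl; apply H|].
    intros o1 o2 l l' _ _ H _. unfold ev0; simpl. split; [reflexivity| apply H].
  - destruct IHp as [IHm IHe]. rewrite Forall_forall in H.
    split.
    + intros l l' Hl. rewrite !M_comp.
      assert (forall g, In g gs -> ev0 (M g) l <= ev0 (M g) l') by (intros g Hg; apply (H g Hg); auto).
      pose proof (list_sum_le _ _ _ H0). pose proof (IHm _ _ (le_list_map _ _ _ H0)). lia.
    + intros o1 o2 l l' B1 B2 Hl Ha. rewrite M_comp in Ha. rewrite M_comp.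
      set (VM := map (fun g => ev0 (M g) l') gs) in *.
      assert (Hg : forall g, In g gs -> pr_eval o1 g l = pr_eval o2 g l /\ pr_eval o1 g l <= ev0 (M g) l').
      { intros g Hg. apply (H g Hg); auto. intros j Hj. apply Ha.
        pose proof (in_le_sum (fun g => ev0 (M g) l') gs g Hg). fold VM in H0. lia. }
      rewrite !ev_comp.
      replace (map (fun g => pr_eval o2 g l) gs) with (map (fun g => pr_eval o1 g l) gs)
        by (apply map_ext_in; intros g Hg'; apply Hg; auto).
      assert (Hle : le_list (map (fun g => pr_eval o1 g l) gs) VM) by (apply le_list_map; intros g Hg'; apply Hg; auto).
      destruct (IHe o1 o2 _ _ B1 B2 Hle) as [E1 E2].
      { intros j Hj. apply Ha. lia. }
      split; auto. lia.
  - destruct IHp1 as [Mg Eg]. destruct IHp2 as [Mh Eh].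
    split.
    + intros l l' Hl. rewrite !M_rec.
      eapply Nat.le_trans. apply RM_mono_k. apply (Hl 0).
      apply RM_mono_rest; auto. apply le_list_tl; auto.
    + intros o1 o2 l l' B1 B2 Hl Ha. rewrite M_rec in *. rewrite !ev_rec.
      set (x' := nth 0 l' 0) in *. assert (Hx : nth 0 l 0 <= x') by apply Hl.
      set (R := RM p1 p2 (tl l') ) in *.
      assert (forall k, k <= x' -> prec o1 p1 p2 (tl l) k = prec o2 p1 p2 (tl l) k /\ prec o1 p1 p2 (tl l) k <= R k).
      { induction k; intros Hk; cbn [prec].
        - apply Eg; auto. apply le_list_tl; auto. intros j Hj. apply Ha.
          pose proof (RM_mono_k p1 p2 (tl l') 0 x' ltac:(lia)). cbn [RM] in H. unfold R. lia.
        - destruct (IHk ltac:(lia)) as [E1 E2]. rewrite <- E1.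
          destruct (Eh o1 o2 (k :: prec o1 p1 p2 (tl l) k :: tl l) (k :: R k :: tl l') B1 B2) as [F1 F2].
          + apply le_list_cons; auto. apply le_list_cons; auto. apply le_list_tl; auto.
          + intros j Hj. apply Ha. pose proof (RM_mono_k p1 p2 (tl l') (S k) x' Hk). cbn [RM] in H. unfold R in *. lia.
          + split; auto. unfold R. cbn [RM]. fold R. lia. }
      destruct (H (nth 0 l 0) Hx) as [E1 E2]. split; auto.
      pose proof (RM_mono_k p1 p2 (tl l') _ _ Hx). unfold R in *. lia.
  - split; [intros l l' H; unfold ev0; cbn [M]; rewrite !POW2_sem; apply Nat.pow_le_mono_r; [lia| apply H]|].
    intros o1 o2 l l' B1 B2 Hl Ha. cbn [M] in *. unfold ev0 in *. rewrite POW2_sem in *. cbn [pr_eval].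
    assert (nth 0 l 0 <= n0 l') by apply Hl.
    assert (2 ^ nth 0 l 0 <= 2 ^ n0 l') by (apply Nat.pow_le_mono_r; lia).
    pose proof (pow_ge (nth 0 l 0)).
    split. apply Ha. lia. specialize (B1 (nth 0 l 0)). lia.
Qed.

Lemma M_of : forall p, oracle_free (M p) = true.
Proof.
  assert (HA : oracle_free ADD = true) by reflexivity.
  assert (HP : oracle_free POW2 = true) by reflexivity.
  induction p using pr_ind2; cbn [M]; auto.
  - rewrite of_comp, HA. cbn [forallb]. rewrite (of_comp (M p)), IHp. rewrite andb_true_r. simpl andb. apply andb_true_intro; split.
    + rewrite forallb_forall. intros x Hx. apply in_map_iff in Hx as [g [<- Hg]]. rewrite Forall_forall in H. auto.
    + induction gs; auto. rewrite of_comp, HA. cbn [forallb]. inversion H; subst. rewrite H2, IHgs; auto.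
  - rewrite of_rec, IHp1, of_comp, HA. cbn [forallb]. rewrite IHp2. reflexivity.
Qed.

End Part6.
Import Part6.

Module Part7.
Import ListNotations.
Open Scope R_scope.

Fixpoint binom (n k : nat) : nat :=
  match n, k with
  | _, O => 1%nat
  | O, S _ => 0%nat
  | S n', S k' => (binom n' k' + binom n' k)%nat
  end.

Lemma binom_n0 n : binom n 0 = 1%nat. Proof. destruct n; reflexivity. Qed.

Lemma binom_over : forall n k, (n < k)%nat -> binom n k = 0%nat.
Proof. induction n; intros [|k] H; simpl; try lia; auto. rewrite !IHn; lia. Qed.

Lemma binom_fact : forall n k, (k <= n)%nat -> (binom n k * (fact k * fact (n - k)) = fact n)%nat.
Proof.
  induction n; intros k Hk.
  - destruct k; simpl; [reflexivity| lia].
  - destruct k as [|k].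
    + simpl. lia.
    + simpl binom. destruct (Nat.eq_dec k n) as [->|Hne].
      * rewrite (binom_over n (S n)) by lia. rewrite Nat.sub_diag. pose proof (IHn n (le_n n)).
        rewrite Nat.sub_diag in H. simpl fact in *. nia.
      * pose proof (IHn k ltac:(lia)) as H1. pose proof (IHn (S k) ltac:(lia)) as H2.
        replace (S n - S k)%nat with (n - k)%nat by lia.
        replace (n - k)%nat with (S (n - S k)) in H1 |- * by lia.
        simpl fact in *. nia.
Qed.

Fixpoint sumR (f : nat -> R) (n : nat) : R := match n with O => 0 | S k => sumR f k + f k end.

Lemma sumR_ext f g n : (forall k, (k < n)%nat -> f k = g k) -> sumR f n = sumR g n.
Proof. induction n; simpl; intros; auto. rewrite IHn, H; auto. Qed.
Lemma sumR_plus f g n : sumR (fun k => f k + g k) n = sumR f n + sumR g n.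
Proof. induction n; simpl; [lra| rewrite IHn; lra]. Qed.
Lemma sumR_scal c f n : sumR (fun k => c * f k) n = c * sumR f n.
Proof. induction n; simpl; [lra| rewrite IHn; lra]. Qed.
Lemma sumR_shift f n : sumR f (S n) = f O + sumR (fun k => f (S k)) n.
Proof. induction n. simpl; lra. change (sumR f (S (S n))) with (sumR f (S n) + f (S n)). rewrite IHn. simpl. lra. Qed.
Lemma sumR_le f g n : (forall k, (k < n)%nat -> f k <= g k) -> sumR f n <= sumR g n.
Proof. induction n; simpl; intros; [lra|]. pose proof (H n (Nat.lt_succ_diag_r n)). pose proof (IHn (fun k Hk => H k (Nat.lt_lt_succ_r _ _ Hk))). lra. Qed.
Lemma sumR_abs f n : Rabs (sumR f n) <= sumR (fun k => Rabs (f k)) n.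
Proof. induction n; simpl. rewrite Rabs_R0; lra. eapply Rle_trans. apply Rabs_triang. lra. Qed.
Lemma sumR_const c n : sumR (fun _ => c) n = INR n * c.
Proof. induction n; simpl sumR; [simpl; lra|]. rewrite IHn, S_INR. lra. Qed.

Definition bern2 (N k : nat) (a b : R) := INR (binom N k) * a ^ k * b ^ (N - k).

Lemma bern2_S0 N a b : bern2 (S N) 0 a b = b * bern2 N 0 a b.
Proof. unfold bern2. rewrite !binom_n0. simpl. rewrite Nat.sub_0_r. ring. Qed.

Lemma bern2_SS N k a b : bern2 (S N) (S k) a b = a * bern2 N k a b + b * bern2 N (S k) a b.
Proof.
  unfold bern2. simpl binom. rewrite plus_INR.
  destruct (Nat.le_gt_cases (S k) N).
  - replace (S N - S k)%nat with (S (N - S k)) by lia. replace (N - k)%nat with (S (N - S k)) by lia.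
    simpl. ring.
  - rewrite (binom_over N (S k)) by lia. simpl INR. replace (S N - S k)%nat with (N - k)%nat by lia. simpl. ring.
Qed.

Definition EB (N : nat) (a b : R) (g : nat -> R) := sumR (fun k => g k * bern2 N k a b) (S N).

Lemma bern2_over N a b : bern2 N (S N) a b = 0.
Proof. unfold bern2. rewrite binom_over by lia. simpl. ring. Qed.

Lemma EB_S N a b g : EB (S N) a b g = a * EB N a b (fun k => g (S k)) + b * EB N a b g.
Proof.
  unfold EB. rewrite (sumR_shift _ (S N)). rewrite bern2_S0.
  rewrite (sumR_ext _ (fun k => a * (g (S k) * bern2 N k a b) + b * (g (S k) * bern2 N (S k) a b)))
    by (intros; rewrite bern2_SS; ring).
  rewrite sumR_plus, !sumR_scal.
  rewrite (sumR_shift (fun k => g k * bern2 N k a b) N).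
  change (sumR (fun k => g (S k) * bern2 N (S k) a b) (S N)) with
    (sumR (fun k => g (S k) * bern2 N (S k) a b) N + g (S N) * bern2 N (S N) a b).
  rewrite bern2_over. ring.
Qed.

Lemma EB_ext N a b g h : (forall k, (k <= N)%nat -> g k = h k) -> EB N a b g = EB N a b h.
Proof. intros H. unfold EB. apply sumR_ext. intros. rewrite H; auto. lia. Qed.

Lemma EB_lin N a b g h c d : EB N a b (fun k => c * g k + d * h k) = c * EB N a b g + d * EB N a b h.
Proof. unfold EB. rewrite (sumR_ext _ (fun k => c * (g k * bern2 N k a b) + d * (h k * bern2 N k a b))) by (intros; ring).
  rewrite sumR_plus, !sumR_scal. ring. Qed.

Lemma EB_1 N a b : EB N a b (fun _ => 1) = (a + b) ^ N.
Proof. induction N. unfold EB, bern2. simpl. rewrite ?binom_n0. simpl. ring. rewrite EB_S. rewrite IHN. simpl. ring. Qed.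

Lemma EB_id N x : EB N x (1 - x) INR = INR N * x.
Proof.
  induction N. unfold EB, bern2. simpl. rewrite ?binom_n0. simpl. ring.
  rewrite EB_S. rewrite (EB_ext _ _ _ (fun k => INR (S k)) (fun k => 1 * INR k + 1 * 1)) by (intros; rewrite S_INR; ring).
  rewrite EB_lin, EB_1, IHN. replace (x + (1 - x)) with 1 by ring. rewrite pow1, S_INR. ring.
Qed.

Lemma EB_sq N x : EB N x (1 - x) (fun k => INR k * INR k) = INR N * x + INR N * (INR N - 1) * x * x.
Proof.
  induction N. unfold EB, bern2. simpl. rewrite ?binom_n0. simpl. ring.
  rewrite EB_S. rewrite (EB_ext _ _ _ (fun k => INR (S k) * INR (S k)) (fun k => 1 * (INR k * INR k) + 1 * (2 * INR k + 1)))
    by (intros; rewrite S_INR; ring).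
  rewrite EB_lin, IHN.
  rewrite (EB_ext _ _ _ (fun k => 2 * INR k + 1) (fun k => 2 * INR k + 1 * 1)) by (intros; ring).
  rewrite EB_lin, EB_1, EB_id. replace (x + (1 - x)) with 1 by ring. rewrite pow1, S_INR. ring.
Qed.

Lemma EB_var N x : EB N x (1 - x) (fun k => (INR k - INR N * x) ^ 2) = INR N * x * (1 - x).
Proof.
  rewrite (EB_ext _ _ _ _ (fun k => 1 * (INR k * INR k) + 1 * ((- 2 * INR N * x) * INR k + (INR N * INR N * x * x) * 1)))
    by (intros; ring).
  rewrite EB_lin, EB_lin, EB_sq, EB_id, EB_1. replace (x + (1 - x)) with 1 by ring. rewrite pow1. ring.
Qed.

Lemma bern2_nonneg N k x : 0 <= x <= 1 -> 0 <= bern2 N k x (1 - x).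
Proof. intros. unfold bern2. apply Rmult_le_pos; [apply Rmult_le_pos|]; [apply pos_INR| apply pow_le; lra| apply pow_le; lra]. Qed.

End Part7.
Import Part7.

Module Part8.
Import ListNotations.
Open Scope R_scope.

Lemma EB_mono N x g h : 0 <= x <= 1 -> (forall k, (k <= N)%nat -> g k <= h k) -> EB N x (1 - x) g <= EB N x (1 - x) h.
Proof. intros Hx H. unfold EB. apply sumR_le. intros k Hk. apply Rmult_le_compat_r. apply bern2_nonneg; auto. apply H; lia. Qed.

Lemma EB_abs N x g : 0 <= x <= 1 -> Rabs (EB N x (1 - x) g) <= EB N x (1 - x) (fun k => Rabs (g k)).
Proof. intros Hx. unfold EB. eapply Rle_trans. apply sumR_abs. apply sumR_le. intros k _.
  rewrite Rabs_mult. rewrite (Rabs_right (bern2 N k x (1 - x))). lra. apply Rle_ge, bern2_nonneg; auto. Qed.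

Lemma bernstein_approx (F : R -> R) (v : nat -> R) N x eps delta eta Mb :
  (1 <= N)%nat -> 0 <= x <= 1 -> 0 < delta -> 0 <= eps ->
  (forall k, (k <= N)%nat -> Rabs (v k - F (INR k / INR N)) <= eta) ->
  (forall k, (k <= N)%nat -> Rabs (INR k / INR N - x) <= delta -> Rabs (F (INR k / INR N) - F x) <= eps) ->
  (forall k, (k <= N)%nat -> Rabs (F (INR k / INR N) - F x) <= 2 * Mb) ->
  Rabs (EB N x (1 - x) v - F x) <= eta + eps + Mb / (2 * INR N * delta ^ 2).
Proof.
  intros HN Hx Hd He Hv Hmod Hbd.
  assert (HNr : 1 <= INR N) by (apply (le_INR 1); auto).
  assert (E1 : EB N x (1 - x) (fun _ => 1) = 1) by (rewrite EB_1; replace (x + (1 - x)) with 1 by ring; apply pow1).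
  replace (EB N x (1 - x) v - F x) with (EB N x (1 - x) (fun k => 1 * v k + (- F x) * 1)).
  2:{ rewrite EB_lin, E1. ring. }
  eapply Rle_trans. apply EB_abs; auto.
  set (c := 2 * Mb / delta ^ 2).
  assert (Hc : 0 <= Mb).
  { specialize (Hbd 0%nat ltac:(lia)). pose proof (Rabs_pos (F (INR 0 / INR N) - F x)). lra. }
  eapply Rle_trans. apply EB_mono; auto.
  instantiate (1 := fun k => (eta + eps) * 1 + (c / (INR N * INR N)) * (INR k - INR N * x) ^ 2).
  - intros k Hk. cbv beta.
    assert (Rabs (1 * v k + - F x * 1) <= eta + Rabs (F (INR k / INR N) - F x)).
    { replace (1 * v k + - F x * 1) with ((v k - F (INR k / INR N)) + (F (INR k / INR N) - F x)) by ring.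
      eapply Rle_trans. apply Rabs_triang. specialize (Hv k Hk). lra. }
    assert (Hsq : (INR k / INR N - x) ^ 2 = (INR k - INR N * x) ^ 2 / (INR N * INR N)) by (field; lra).
    assert (0 <= c / (INR N * INR N) * (INR k - INR N * x) ^ 2).
    { assert (0 <= c) by (unfold c, Rdiv; apply Rmult_le_pos; [lra| left; apply Rinv_0_lt_compat, pow_lt; lra]).
      apply Rmult_le_pos; [unfold Rdiv; apply Rmult_le_pos; [auto| left; apply Rinv_0_lt_compat; nra] | apply pow2_ge_0]. }
    destruct (Rle_lt_dec (Rabs (INR k / INR N - x)) delta) as [Hle|Hlt].
    + specialize (Hmod k Hk Hle). lra.
    + assert (delta ^ 2 < (INR k / INR N - x) ^ 2).
      { rewrite <- (pow2_abs (INR k / INR N - x)). pose proof (Rabs_pos (INR k / INR N - x)). nra. }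
      assert (c / (INR N * INR N) * (INR k - INR N * x) ^ 2 = c * (INR k / INR N - x) ^ 2) by (rewrite Hsq; field; lra).
      assert (2 * Mb <= c * (INR k / INR N - x) ^ 2).
      { unfold c. apply Rmult_le_reg_r with (r := delta ^ 2). apply pow_lt; lra.
        replace (2 * Mb / delta ^ 2 * (INR k / INR N - x) ^ 2 * delta ^ 2) with (2 * Mb * (INR k / INR N - x) ^ 2).
        2:{ field. split; lra. } nra. }
      specialize (Hbd k Hk). lra.
  - rewrite EB_lin, E1, EB_var.
    assert (x * (1 - x) <= / 4) by (pose proof (pow2_ge_0 (x - / 2)); simpl in *; nra).
    assert (c / (INR N * INR N) * (INR N * x * (1 - x)) <= Mb / (2 * INR N * delta ^ 2)).
    { replace (c / (INR N * INR N) * (INR N * x * (1 - x))) with ((2 * Mb / (INR N * delta ^ 2)) * (x * (1 - x))).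
      2:{ unfold c. field; repeat split; lra. }
      replace (Mb / (2 * INR N * delta ^ 2)) with ((2 * Mb / (INR N * delta ^ 2)) * / 4).
      2:{ field; repeat split; lra. }
      apply Rmult_le_compat_l; auto. apply Rmult_le_pos; [lra|]. apply Rlt_le, Rinv_0_lt_compat.
      apply Rmult_lt_0_compat; [lra| apply pow_lt; lra]. }
    lra.
Qed.

End Part8.
Import Part8.

Module Part9.
Import ListNotations.
Open Scope R_scope.

Lemma double_sum (F : nat -> nat -> R) N :
  sumR (fun m => sumR (fun k => F k (m - k)%nat) (S m)) (S N) = sumR (fun k => sumR (fun j => F k j) (S (N - k))) (S N).
Proof.
  induction N.
  - simpl. ring.
  - change (sumR (fun m => sumR (fun k => F k (m - k)%nat) (S m)) (S (S N))) with
      (sumR (fun m => sumR (fun k => F k (m - k)%nat) (S m)) (S N) + sumR (fun k => F k (S N - k)%nat) (S (S N))).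
    rewrite IHN.
    change (sumR (fun k => sumR (fun j => F k j) (S (S N - k))) (S (S N))) with
      (sumR (fun k => sumR (fun j => F k j) (S (S N - k))) (S N) + sumR (fun j => F (S N) j) (S (S N - S N))).
    rewrite (sumR_ext (fun k => sumR (fun j => F k j) (S (S N - k))) (fun k => sumR (fun j => F k j) (S (N - k)) + F k (S (N - k))))
      by (intros k Hk; replace (S N - k)%nat with (S (N - k)) by lia; reflexivity).
    rewrite sumR_plus. rewrite Nat.sub_diag.
    change (sumR (fun k => F k (S N - k)%nat) (S (S N))) with (sumR (fun k => F k (S N - k)%nat) (S N) + F (S N) (S N - S N)%nat).
    rewrite Nat.sub_diag.
    rewrite (sumR_ext (fun k => F k (S N - k)%nat) (fun k => F k (S (N - k)))) by (intros k Hk; f_equal; lia).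
    change (sumR (fun j => F (S N) j) 1) with (0 + F (S N) 0%nat). ring.
Qed.

Lemma pow_expand n x : (1 - x) ^ n = sumR (fun j => INR (binom n j) * (-1) ^ j * x ^ j) (S n).
Proof.
  pose proof (EB_1 n (- x) 1). replace (- x + 1) with (1 - x) in H by ring. rewrite <- H.
  unfold EB, bern2. apply sumR_ext. intros k _. rewrite pow1.
  replace (- x) with ((-1) * x) by ring. rewrite Rpow_mult_distr. ring.
Qed.

Definition cf (N : nat) (w : nat -> R) (m : nat) :=
  sumR (fun k => w k * INR (binom N k) * INR (binom (N - k) (m - k)) * (-1) ^ (m - k)) (S m).

Lemma poly_bern N w x : sumR (fun m => cf N w m * x ^ m) (S N) = EB N x (1 - x) w.
Proof.
  unfold cf.
  set (F := fun k j => w k * INR (binom N k) * INR (binom (N - k) j) * (-1) ^ j * x ^ (k + j)).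
  rewrite (sumR_ext (fun m => sumR _ (S m) * x ^ m) (fun m => sumR (fun k => F k (m - k)%nat) (S m))).
  2:{ intros m Hm. rewrite Rmult_comm, <- sumR_scal. apply sumR_ext. intros k Hk. unfold F.
      replace (k + (m - k))%nat with m by lia. ring. }
  rewrite (double_sum F). unfold EB, bern2. apply sumR_ext. intros k Hk.
  rewrite pow_expand. rewrite <- !sumR_scal. apply sumR_ext. intros j Hj. unfold F. rewrite pow_add. ring.
Qed.

Lemma poly_eval_seq (g : nat -> R) x : forall n s,
  poly_eval (map g (seq s n)) x = sumR (fun t => g (s + t)%nat * x ^ t) n.
Proof.
  induction n; intros s; [reflexivity|].
  change (poly_eval (map g (seq s (S n))) x) with (g s + x * poly_eval (map g (seq (S s) n)) x).
  rewrite IHn. rewrite sumR_shift. rewrite Nat.add_0_r. rewrite <- sumR_scal.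
  rewrite (sumR_ext (fun k => g (s + S k)%nat * x ^ S k) (fun t => x * (g (S s + t)%nat * x ^ t)))
    by (intros; replace (s + S k)%nat with (S s + k)%nat by lia; simpl; ring).
  simpl. ring.
Qed.

End Part9.
Import Part9.

Module Part10.
Import ListNotations.
Open Scope R_scope.

Definition nfloor (t : R) : nat := Z.to_nat (up t - 1).

Lemma nfloor_spec t : 0 <= t -> INR (nfloor t) <= t < INR (nfloor t) + 1.
Proof.
  intros Ht. destruct (archimed t) as [H1 H2].
  assert (Hp : (0 < up t)%Z) by (apply lt_IZR; simpl; lra).
  unfold nfloor. rewrite INR_IZR_INZ, Z2Nat.id by lia. rewrite minus_IZR. simpl. lra.
Qed.

Lemma pow2_pos j : 0 < 2 ^ j.
Proof. apply pow_lt. lra. Qed.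

Lemma div_bounds m x p : 0 < p -> INR m <= x * p < INR m + 1 -> x - / p < INR m / p <= x.
Proof.
  intros Hp [H1 H2]. set (y := INR m / p). assert (Hy : y * p = INR m) by (unfold y; field; lra).
  assert (Hi : / p * p = 1) by (field; lra). assert (0 < / p) by (apply Rinv_0_lt_compat; auto).
  split; nra.
Qed.

Lemma inv_pow2_small eps : 0 < eps -> exists N, forall n, (n >= N)%nat -> / 2 ^ n < eps.
Proof.
  intros He. destruct (archimed (/ eps)) as [H1 _].
  exists (Z.to_nat (up (/ eps))). intros n Hn.
  assert (INR n < 2 ^ n).
  { replace 2 with (INR 2) by (simpl; lra). rewrite <- (pow_INR 2 n). apply lt_INR. apply Nat.pow_gt_lin_r. lia. }
  assert (/ eps < INR n).
  { assert (0 < / eps) by (apply Rinv_0_lt_compat; auto).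
    assert (Hp : (0 < up (/ eps))%Z) by (apply lt_IZR; simpl; lra).
    apply le_INR in Hn. rewrite INR_IZR_INZ, Z2Nat.id in Hn by lia. lra. }
  assert (0 < / eps) by (apply Rinv_0_lt_compat; auto).
  rewrite <- (Rinv_inv eps). apply Rinv_lt_contravar. apply Rmult_lt_0_compat; auto. apply pow2_pos. lra.
Qed.

Lemma floor_name x m : 0 <= x <= 1 -> (forall j, INR (m j) <= x * 2 ^ j < INR (m j) + 1) -> is_name x m.
Proof.
  intros Hx Hm. split; [|split].
  - intros i. apply INR_le. rewrite pow_INR. replace (INR 2) with 2 by (simpl; lra). destruct (Hm i). pose proof (pow2_pos i). nra.
  - intros i. pose proof (div_bounds _ _ _ (pow2_pos i) (Hm i)).
    pose proof (div_bounds _ _ _ (pow2_pos (S i)) (Hm (S i))).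
    assert (/ 2 ^ S i = / 2 * / 2 ^ i) by (simpl; field; apply pow_nonzero; lra).
    assert (0 < / 2 ^ i) by (apply Rinv_0_lt_compat, pow2_pos).
    apply Rabs_def1; lra.
  - intros eps He. destruct (inv_pow2_small eps He) as [N HN]. exists N. intros n Hn.
    pose proof (div_bounds _ _ _ (pow2_pos n) (Hm n)). specialize (HN n Hn). unfold R_dist.
    assert (0 < / 2 ^ n) by (apply Rinv_0_lt_compat, pow2_pos).
    apply Rabs_def1; lra.
Qed.

Lemma fname x : 0 <= x <= 1 -> is_name x (fun j => nfloor (x * 2 ^ j)).
Proof. intros Hx. apply floor_name; auto. intros j. apply nfloor_spec. pose proof (pow2_pos j). nra. Qed.

Lemma fc_partial r n : fast_cauchy r -> forall k, Rabs (r n - r (n + k)%nat) <= 2 / 2 ^ n - 2 / 2 ^ (n + k).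
Proof.
  intros Hr. induction k.
  - rewrite Nat.add_0_r. unfold Rminus. rewrite Rplus_opp_r, Rabs_R0. lra.
  - replace (r n - r (n + S k)%nat) with ((r n - r (n + k)%nat) + (r (n + k)%nat - r (S (n + k)))) by (rewrite Nat.add_succ_r; ring).
    eapply Rle_trans. apply Rabs_triang. specialize (Hr (n + k)%nat).
    assert (2 / 2 ^ (n + S k) = / 2 ^ (n + k)). { rewrite Nat.add_succ_r. simpl. field. apply pow_nonzero. lra. }
    assert (2 / 2 ^ (n + k) = 2 * / 2 ^ (n + k)) by (unfold Rdiv; ring). lra.
Qed.

Lemma fc_err r L : fast_cauchy r -> Un_cv r L -> forall n, Rabs (r n - L) <= 2 / 2 ^ n.
Proof.
  intros Hr HL n. destruct (Rle_lt_dec (Rabs (r n - L)) (2 / 2 ^ n)) as [H|H]; auto. exfalso.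
  destruct (HL (Rabs (r n - L) - 2 / 2 ^ n)) as [N HN]. lra.
  specialize (HN (n + N)%nat ltac:(lia)). unfold R_dist in HN.
  pose proof (fc_partial r n Hr N).
  assert (0 < 2 / 2 ^ (n + N)) by (unfold Rdiv; apply Rmult_lt_0_compat; [lra| apply Rinv_0_lt_compat, pow2_pos]).
  assert (Rabs (r n - L) <= Rabs (r n - r (n + N)%nat) + Rabs (r (n + N)%nat - L)).
  { replace (r n - L) with ((r n - r (n + N)%nat) + (r (n + N)%nat - L)) by ring. apply Rabs_triang. }
  lra.
Qed.

Lemma rat_code_bound c : Rabs (rat_of_code c) <= INR c.
Proof.
  unfold rat_of_code. pose proof (unpair_le c) as [Ha Hr].
  destruct (unpair c) as [a r]. simpl in Ha, Hr. pose proof (unpair_le r) as [Hb Hc].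
  destruct (unpair r) as [b cc]. simpl in Hb, Hc.
  apply le_INR in Ha. apply le_INR in Hr. apply le_INR in Hb.
  assert (1 <= INR (S cc)) by (apply (le_INR 1); lia).
  unfold Rdiv. rewrite Rabs_mult, Rabs_inv, (Rabs_right (INR (S cc))) by lra.
  assert (Rabs (INR a - INR b) <= INR c).
  { pose proof (pos_INR a). pose proof (pos_INR b). apply Rabs_le. lra. }
  assert (0 < / INR (S cc) <= 1).
  { split. apply Rinv_0_lt_compat; lra. rewrite <- Rinv_1. apply Rinv_le_contravar; lra. }
  pose proof (Rabs_pos (INR a - INR b)). nra.
Qed.

End Part10.
Import Part10.

Module Part11.
Import ListNotations.
Open Scope R_scope.

Definition HPhi (f : R -> R) (Phi : pr) := forall x : R, 0 <= x <= 1 -> forall m, is_name x m ->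
  fast_cauchy (fun n => rat_of_code (pr_eval m Phi [n])) /\ Un_cv (fun n => rat_of_code (pr_eval m Phi [n])) (f x).

Lemma out_err f Phi x m n : HPhi f Phi -> 0 <= x <= 1 -> is_name x m ->
  Rabs (rat_of_code (pr_eval m Phi [n]) - f x) <= 2 / 2 ^ n.
Proof. intros H Hx Hm. destruct (H x Hx m Hm) as [H1 H2]. apply (fc_err _ _ H1 H2 n). Qed.

Lemma name_bnd x m : is_name x m -> bnd m.
Proof. intros [H _]. exact H. Qed.

Definition Bn Phi n := ev0 (M Phi) [n].

Lemma same_out Phi m1 m2 n : bnd m1 -> bnd m2 -> (forall j, (j <= Bn Phi n)%nat -> m1 j = m2 j) ->
  pr_eval m1 Phi [n] = pr_eval m2 Phi [n].
Proof. intros B1 B2 Ha. apply (proj2 (M_ok Phi) m1 m2 [n] [n] B1 B2); auto. intros j; lia. Qed.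

Lemma f_bound f Phi x : HPhi f Phi -> 0 <= x <= 1 -> Rabs (f x) <= INR (Bn Phi 0) + 2.
Proof.
  intros H Hx. pose proof (fname x Hx) as Hn.
  pose proof (out_err f Phi x _ 0 H Hx Hn). simpl pow in H0.
  assert (Hle : (pr_eval (fun j => nfloor (x * 2 ^ j)) Phi [0%nat] <= Bn Phi 0)%nat).
  { apply (proj2 (M_ok Phi) _ _ [0%nat] [0%nat] (name_bnd _ _ Hn) (name_bnd _ _ Hn)); auto. intros j; lia. }
  apply le_INR in Hle. pose proof (rat_code_bound (pr_eval (fun j => nfloor (x * 2 ^ j)) Phi [0%nat])).
  set (r := rat_of_code _) in *. set (v := INR (pr_eval _ Phi _)) in *. clearbody r v.
  unfold Rabs in *. repeat destruct Rcase_abs; lra.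
Qed.

Lemma floor_bounds x j : 0 <= x <= 1 -> x - / 2 ^ j < INR (nfloor (x * 2 ^ j)) / 2 ^ j <= x.
Proof. intros Hx. apply div_bounds. apply pow2_pos. apply nfloor_spec. pose proof (pow2_pos j). nra. Qed.

Lemma hybrid_name x y B : 0 <= y <= x -> x <= 1 -> x - y <= / 2 ^ (B + 2) ->
  is_name y (fun j => if (j <=? B)%nat then nfloor (x * 2 ^ j) else nfloor (y * 2 ^ j)).
Proof.
  intros Hy Hx Hxy.
  assert (Hx' : 0 <= x <= 1) by lra. assert (Hy' : 0 <= y <= 1) by lra.
  destruct (fname x Hx') as [Bx [Fx Cx]]. destruct (fname y Hy') as [By [Fy Cy]].
  split; [|split].
  - intros j. destruct (j <=? B)%nat; auto.
  - intros j. destruct (Nat.leb_spec j B); destruct (Nat.leb_spec (S j) B); auto; try lia.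
    + assert (j = B) by lia. subst j.
      pose proof (floor_bounds x B Hx'). pose proof (floor_bounds y (S B) Hy').
      assert (/ 2 ^ S B = / 2 * / 2 ^ B) by (simpl; field; apply pow_nonzero; lra).
      assert (/ 2 ^ (B + 2) = / 4 * / 2 ^ B) by (rewrite pow_add; simpl; field; apply pow_nonzero; lra).
      assert (0 < / 2 ^ B) by (apply Rinv_0_lt_compat, pow2_pos).
      apply Rabs_def1; lra.
  - intros eps He. destruct (Cy eps He) as [N HN]. exists (Nat.max N (S B)). intros n Hn.
    destruct (Nat.leb_spec n B); [lia|]. apply HN. lia.
Qed.

Lemma modulus_le f Phi x y n : HPhi f Phi -> 0 <= y <= x -> x <= 1 -> x - y <= / 2 ^ (Bn Phi n + 2) ->
  Rabs (f x - f y) <= 4 / 2 ^ n.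
Proof.
  intros H Hy Hx Hxy.
  assert (Hx' : 0 <= x <= 1) by lra. assert (Hy' : 0 <= y <= 1) by lra.
  pose proof (fname x Hx') as Nx. pose proof (hybrid_name x y (Bn Phi n) Hy Hx Hxy) as Ny.
  pose proof (out_err f Phi x _ n H Hx' Nx). pose proof (out_err f Phi y _ n H Hy' Ny).
  rewrite <- (same_out Phi (fun j => nfloor (x * 2 ^ j)) _ n (name_bnd _ _ Nx) (name_bnd _ _ Ny)) in H1.
  2:{ intros j Hj. destruct (Nat.leb_spec j (Bn Phi n)); [reflexivity|lia]. }
  set (r := rat_of_code _) in *. clearbody r.
  assert (4 / 2 ^ n = 2 / 2 ^ n + 2 / 2 ^ n) by (field; apply pow_nonzero; lra).
  set (t := 2 / 2 ^ n) in *. clearbody t.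
  unfold Rabs in *. repeat destruct Rcase_abs; lra.
Qed.

Lemma modulus f Phi x y n : HPhi f Phi -> 0 <= x <= 1 -> 0 <= y <= 1 -> Rabs (x - y) <= / 2 ^ (Bn Phi n + 2) ->
  Rabs (f x - f y) <= 4 / 2 ^ n.
Proof.
  intros H Hx Hy Hxy. destruct (Rle_lt_dec y x).
  - apply modulus_le with Phi; auto; try lra. rewrite Rabs_right in Hxy; lra.
  - rewrite Rabs_minus_sym. apply modulus_le with Phi; auto; try lra. rewrite Rabs_left in Hxy; lra.
Qed.

End Part11.
Import Part11.

Module Part12.
Import ListNotations.
Local Open Scope nat_scope.

Lemma pad_1 a : pad 1 [a] = [a]. Proof. reflexivity. Qed.
Lemma pad_2 a b : pad 2 [a; b] = [a; b]. Proof. reflexivity. Qed.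
Lemma pad_3 a b c : pad 3 [a; b; c] = [a; b; c]. Proof. reflexivity. Qed.
Lemma pad_4 a b c d : pad 4 [a; b; c; d] = [a; b; c; d]. Proof. reflexivity. Qed.

Definition FACT := compile 1 (ERec (econst 1) (emul (ESucc (EVar 0)) (EVar 1)) (EVar 0)).
Lemma FACT_sem a : pr_eval o0 FACT [a] = fact a.
Proof. unfold FACT. rewrite compile_ok, den_rec. rewrite ?pad_1, ?pad_2, ?pad_3, ?pad_4. cbn [den nth].
  generalize [a] at 1. intros env. induction a; cbn [drec]; [apply den_const|]. rewrite den_mul. cbn [den nth]. rewrite IHa. reflexivity. Qed.
Definition efact a := ECall FACT [a].
Lemma den_fact env a : den env (efact a) = fact (den env a).
Proof. unfold efact. cbn [den map]. apply FACT_sem. Qed.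

Definition BINOM := compile 2 (ediv (efact (EVar 0)) (emul (efact (EVar 1)) (efact (esub (EVar 0) (EVar 1))))).
Lemma BINOM_sem n k : k <= n -> pr_eval o0 BINOM [n; k] = binom n k.
Proof.
  intros Hk. unfold BINOM. rewrite compile_ok. rewrite ?pad_1, ?pad_2, ?pad_3, ?pad_4. rewrite den_div.
  - rewrite den_mul, !den_fact, den_sub. cbn [den nth].
    rewrite <- (binom_fact n k Hk) at 1. apply Nat.div_mul.
    pose proof (lt_O_fact k). pose proof (lt_O_fact (n - k)). nia.
  - rewrite den_mul, !den_fact. pose proof (lt_O_fact (den [n; k] (EVar 1))). pose proof (lt_O_fact (den [n; k] (esub (EVar 0) (EVar 1)))). nia.
Qed.
Definition ebinom a b := ECall BINOM [a; b].

Definition PAR := compile 1 (ERec EZero (esub (econst 1) (EVar 1)) (EVar 0)).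
Lemma PAR_sem a : pr_eval o0 PAR [a] = if Nat.even a then 0 else 1.
Proof. unfold PAR. rewrite compile_ok, den_rec. rewrite ?pad_1, ?pad_2, ?pad_3, ?pad_4. cbn [den nth].
  generalize [a] at 1. intros env. induction a; cbn [drec]; [reflexivity|]. rewrite den_sub, den_const. cbn [den nth]. rewrite IHa.
  rewrite Nat.even_succ, <- Nat.negb_even. destruct (Nat.even a); reflexivity. Qed.

Definition nm (k d : nat) (j : nat) := k * 2 ^ j / 2 ^ d.

Definition NAMEQ := compile 3 (ediv (emul (EVar 1) (epow (econst 2) (EVar 0))) (epow (econst 2) (EVar 2))).
Lemma NAMEQ_sem j k d : pr_eval o0 NAMEQ [j; k; d] = nm k d j.
Proof. unfold NAMEQ. rewrite compile_ok. rewrite ?pad_1, ?pad_2, ?pad_3, ?pad_4. rewrite den_div.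
  - rewrite den_mul, !den_pow, den_const. reflexivity.
  - rewrite den_pow, den_const. cbn [den nth]. apply Nat.neq_0_lt_0, Nat.pow_nonzero. lia. Qed.

Lemma eval_oracle_ext : forall p o o' l, (forall j, o j = o' j) -> pr_eval o p l = pr_eval o' p l.
Proof.
  induction p using pr_ind2; intros o o' l Ho; try reflexivity.
  - rewrite !ev_comp. rewrite (IHp o o') by auto. f_equal. apply map_ext_in. intros g Hg.
    rewrite Forall_forall in H. apply H; auto.
  - rewrite !ev_rec. generalize (nth 0 l 0). induction n; simpl; auto. rewrite IHn. auto.
  - simpl. apply Ho.
Qed.

Definition Kt (Phi : pr) := S (S (need Phi)).
Definition PhiT (Phi : pr) := PComp (TT (Kt Phi) NAMEQ Phi) ((PProj 0 :: repeat PZero (Kt Phi - 1)) ++ [PProj 1; PProj 2]).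

Lemma PhiT_sem Phi n k d : pr_eval o0 (PhiT Phi) [n; k; d] = pr_eval (nm k d) Phi [n].
Proof.
  unfold PhiT. rewrite ev_comp. cbn [map]. rewrite map_app. cbn [map pr_eval nth].
  replace (n :: map (fun g => pr_eval o0 g [n; k; d]) (repeat PZero (Kt Phi - 1)))
    with (pad (Kt Phi) [n]).
  - rewrite TT_ok. apply eval_oracle_ext. intros j. apply NAMEQ_sem.
    unfold Kt; lia. apply okK_need. unfold Kt; lia.
  - apply list_eq_nth.
    + rewrite length_pad. simpl. rewrite length_map, repeat_length. unfold Kt. lia.
    + intros j Hj. rewrite length_pad in Hj. rewrite nth_pad. destruct (Nat.ltb_spec j (Kt Phi)); [|lia].
      destruct j; [reflexivity|]. cbn [nth]. rewrite (nth_map_lt _ _ _ _ PZero) by (rewrite repeat_length; unfold Kt in *; lia).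
      rewrite nth_repeat. destruct j; reflexivity.
Qed.

Definition vk Phi n k d := pr_eval (nm k d) Phi [n].
Definition ca v := fst (unpair v).
Definition cb v := fst (unpair (snd (unpair v))).
Definition cc v := snd (unpair (snd (unpair v))).
Definition zp Phi n k d e := let v := vk Phi n k d in (ca v - cb v) * 2 ^ e / S (cc v).
Definition zq Phi n k d e := let v := vk Phi n k d in (cb v - ca v) * 2 ^ e / S (cc v).

Definition evk Phi := ECall (PhiT Phi) [EVar 0; EVar 1; EVar 2].
Definition ZP Phi := compile 4 (ediv (emul (esub (eun1 (evk Phi)) (eun1 (eun2 (evk Phi)))) (epow (econst 2) (EVar 3))) (ESucc (eun2 (eun2 (evk Phi))))).
Definition ZQ Phi := compile 4 (ediv (emul (esub (eun1 (eun2 (evk Phi))) (eun1 (evk Phi))) (epow (econst 2) (EVar 3))) (ESucc (eun2 (eun2 (evk Phi))))).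

Lemma den_evk Phi n k d e : den [n; k; d; e] (evk Phi) = vk Phi n k d.
Proof. unfold evk. cbn [den map nth]. apply PhiT_sem. Qed.

Lemma ZP_sem Phi n k d e : pr_eval o0 (ZP Phi) [n; k; d; e] = zp Phi n k d e.
Proof. unfold ZP. rewrite compile_ok. rewrite ?pad_1, ?pad_2, ?pad_3, ?pad_4. rewrite den_div by (cbn [den]; lia).
  rewrite den_mul, den_sub, den_pow, den_const, !den_un1, den_succ, !den_un2, den_evk. reflexivity. Qed.
Lemma ZQ_sem Phi n k d e : pr_eval o0 (ZQ Phi) [n; k; d; e] = zq Phi n k d e.
Proof. unfold ZQ. rewrite compile_ok. rewrite ?pad_1, ?pad_2, ?pad_3, ?pad_4. rewrite den_div by (cbn [den]; lia).
  rewrite den_mul, den_sub, den_pow, den_const, !den_un1, den_succ, !den_un2, den_evk. reflexivity. Qed.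

Definition coefA Phi m n d e := sumN (fun k => binom (2 ^ d) k * binom (2 ^ d - k) (m - k) *
  (if Nat.even (m - k) then zp Phi n k d e else zq Phi n k d e)) (S m).
Definition coefB Phi m n d e := sumN (fun k => binom (2 ^ d) k * binom (2 ^ d - k) (m - k) *
  (if Nat.even (m - k) then zq Phi n k d e else zp Phi n k d e)) (S m).

Definition epar a := ECall PAR [a].
Definition eN := epow (econst 2) (EVar 4).
Definition eterm Phi (flag : bool) :=
  let zpE := ECall (ZP Phi) [EVar 3; EVar 0; EVar 4; EVar 5] in
  let zqE := ECall (ZQ Phi) [EVar 3; EVar 0; EVar 4; EVar 5] in
  let par := epar (esub (EVar 2) (EVar 0)) in
  emul (emul (ebinom eN (EVar 0)) (ebinom (esub eN (EVar 0)) (esub (EVar 2) (EVar 0))))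
    (if flag then eadd (emul zpE (esub (econst 1) par)) (emul zqE par)
     else eadd (emul zqE (esub (econst 1) par)) (emul zpE par)).
Definition COEF Phi flag := compile 4 (ERec EZero (eadd (EVar 1) (eterm Phi flag)) (ESucc (EVar 0))).

Lemma COEF_sem Phi flag m n d e : m <= 2 ^ d ->
  pr_eval o0 (COEF Phi flag) [m; n; d; e] = if flag then coefA Phi m n d e else coefB Phi m n d e.
Proof.
  intros Hm. unfold COEF. rewrite compile_ok, den_rec. rewrite ?pad_1, ?pad_2, ?pad_3, ?pad_4. cbn [den nth].
  assert (forall k, k <= S m -> drec [m; n; d; e] EZero (eadd (EVar 1) (eterm Phi flag)) k =
     sumN (fun k => binom (2 ^ d) k * binom (2 ^ d - k) (m - k) *
       (if Nat.even (m - k) then (if flag then zp Phi n k d e else zq Phi n k d e)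
        else (if flag then zq Phi n k d e else zp Phi n k d e))) k).
  { induction k; intros Hk; cbn [drec sumN]; auto. rewrite den_add. cbn [den nth]. rewrite IHk by lia. f_equal.
    unfold eterm. rewrite !den_mul.
    assert (HB1 : forall r, den [k; r; m; n; d; e] (ebinom eN (EVar 0)) = binom (2 ^ d) k).
    { intros r. unfold ebinom, eN. cbn [den map]. rewrite den_pow, den_const. cbn [den nth]. apply BINOM_sem. lia. }
    assert (HB2 : forall r, den [k; r; m; n; d; e] (ebinom (esub eN (EVar 0)) (esub (EVar 2) (EVar 0))) = binom (2 ^ d - k) (m - k)).
    { intros r. unfold ebinom, eN. cbn [den map]. rewrite !den_sub, den_pow, den_const. cbn [den nth]. apply BINOM_sem. lia. }
    rewrite HB1, HB2. f_equal.
    destruct flag; rewrite den_add, !den_mul, den_sub, den_const; unfold epar; cbn [den map nth];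
      rewrite den_sub; cbn [den nth]; rewrite PAR_sem, ZP_sem, ZQ_sem; destruct (Nat.even (m - k)); lia. }
  rewrite H by lia. destruct flag; unfold coefA, coefB; apply sumN_ext; intros k _; destruct (Nat.even (m - k)); reflexivity.
Qed.

Definition code Phi m n d e := cpair (coefA Phi m n d e) (cpair (coefB Phi m n d e) (2 ^ e - 1)).
Definition CODE Phi := compile 4 (epair (ECall (COEF Phi true) [EVar 0; EVar 1; EVar 2; EVar 3])
  (epair (ECall (COEF Phi false) [EVar 0; EVar 1; EVar 2; EVar 3]) (esub (epow (econst 2) (EVar 3)) (econst 1)))).
Lemma CODE_sem Phi m n d e : m <= 2 ^ d -> pr_eval o0 (CODE Phi) [m; n; d; e] = code Phi m n d e.
Proof. intros Hm. unfold CODE. rewrite compile_ok. rewrite ?pad_1, ?pad_2, ?pad_3, ?pad_4. rewrite !den_pair, den_sub, den_pow, !den_const.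
  cbn [den map nth]. rewrite !COEF_sem by auto. reflexivity. Qed.

Fixpoint lcode (l : list nat) : nat := match l with [] => 0 | h :: t => S (cpair h (lcode t)) end.

Definition LIST Phi := compile 3 (ERec EZero
  (ESucc (epair (ECall (CODE Phi) [esub (epow (econst 2) (EVar 3)) (EVar 0); EVar 2; EVar 3; EVar 4]) (EVar 1)))
  (ESucc (epow (econst 2) (EVar 1)))).
Lemma LIST_sem Phi n d e : pr_eval o0 (LIST Phi) [n; d; e] =
  lcode (map (fun m => code Phi m n d e) (seq 0 (S (2 ^ d)))).
Proof.
  unfold LIST. rewrite compile_ok, den_rec. rewrite ?pad_1, ?pad_2, ?pad_3, ?pad_4. rewrite den_succ, den_pow, den_const. cbn [den nth].
  set (N := 2 ^ d).
  assert (forall j, j <= S N -> drec [n; d; e] EZero (ESucc (epair (ECall (CODE Phi) [esub (epow (econst 2) (EVar 3)) (EVar 0); EVar 2; EVar 3; EVar 4]) (EVar 1))) j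
     = lcode (map (fun m => code Phi m n d e) (seq (S N - j) j))).
  { induction j; intros Hj; cbn [drec]; [reflexivity|]. rewrite den_succ, den_pair. cbn [den map nth].
    rewrite den_sub, den_pow, den_const. cbn [den nth]. rewrite CODE_sem by (unfold N; lia). rewrite IHj by lia.
    replace (S N - S j) with (N - j) by lia. replace (S N - j) with (S (N - j)) by lia. reflexivity. }
  rewrite H by lia. rewrite Nat.sub_diag. reflexivity.
Qed.

Definition TOP Phi c0 :=
  let nE := eadd (EVar 0) (econst 4) in
  compile 1 (ECall (LIST Phi) [nE; eadd (eadd (emul (econst 2) (ECall (M Phi) [nE])) (EVar 0)) (econst c0); nE]).

Definition dd Phi c0 i := 2 * ev0 (M Phi) [i + 4] + i + c0.
Lemma TOP_sem Phi c0 i : pr_eval o0 (TOP Phi c0) [i] =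
  lcode (map (fun m => code Phi m (i + 4) (dd Phi c0 i) (i + 4)) (seq 0 (S (2 ^ dd Phi c0 i)))).
Proof.
  unfold TOP. rewrite compile_ok. rewrite ?pad_1, ?pad_2, ?pad_3, ?pad_4. cbn [den map]. rewrite !den_add, den_mul, !den_const. cbn [den map nth].
  rewrite den_add, den_const. cbn [den nth]. rewrite LIST_sem. reflexivity.
Qed.

End Part12.
Import Part12.

Module Part13.
Import ListNotations.
Open Scope R_scope.

Lemma cpair_ge a b : (b <= cpair a b)%nat.
Proof. unfold cpair. lia. Qed.

Lemma lcode_len l : (length l <= lcode l)%nat.
Proof. induction l; simpl; auto. pose proof (cpair_ge a (lcode l)). lia. Qed.

Lemma rl_fuel : forall l fuel, (length l <= fuel)%nat -> ratlist_of_code_fuel fuel (lcode l) = map rat_of_code l.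
Proof.
  induction l; intros fuel Hf; simpl.
  - destruct fuel; reflexivity.
  - destruct fuel as [|fuel]; simpl in Hf; [lia|]. cbn [ratlist_of_code_fuel]. rewrite unpair_pair. rewrite IHl by lia. reflexivity.
Qed.

Lemma rl_lcode l : ratlist_of_code (lcode l) = map rat_of_code l.
Proof. apply rl_fuel, lcode_len. Qed.

Lemma INR_pow2 e : INR (2 ^ e) = 2 ^ e.
Proof. rewrite pow_INR. reflexivity. Qed.

Lemma rat_code Phi m n d e : rat_of_code (code Phi m n d e) = (INR (coefA Phi m n d e) - INR (coefB Phi m n d e)) / 2 ^ e.
Proof.
  unfold rat_of_code, code. rewrite !unpair_pair.
  replace (S (2 ^ e - 1)) with (2 ^ e)%nat by (pose proof (Nat.pow_nonzero 2 e); lia).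
  rewrite INR_pow2. reflexivity.
Qed.

Lemma INR_sumN f n : INR (sumN f n) = sumR (fun k => INR (f k)) n.
Proof. induction n; simpl sumN; simpl sumR; [reflexivity|]. rewrite plus_INR, IHn. reflexivity. Qed.

Lemma pow_m1 x : (-1) ^ x = if Nat.even x then 1 else -1.
Proof. induction x; [reflexivity|]. simpl pow. rewrite IHx, Nat.even_succ, <- Nat.negb_even. destruct (Nat.even x); simpl; ring. Qed.

Lemma sumR_minus f g n : sumR f n - sumR g n = sumR (fun k => f k - g k) n.
Proof. induction n; simpl; [ring|]. rewrite <- IHn. ring. Qed.

Definition wk Phi n d e k := (INR (zp Phi n k d e) - INR (zq Phi n k d e)) / 2 ^ e.

Lemma cf_code Phi m n d e : cf (2 ^ d) (wk Phi n d e) m = rat_of_code (code Phi m n d e).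
Proof.
  rewrite rat_code. unfold coefA, coefB. rewrite !INR_sumN. rewrite sumR_minus. unfold Rdiv. rewrite Rmult_comm, <- sumR_scal. unfold cf.
  apply sumR_ext. intros k _. rewrite pow_m1. unfold wk. rewrite !mult_INR.
  destruct (Nat.even (m - k)); field; apply pow_nonzero; lra.
Qed.

Lemma div_floor p q : (0 < q)%nat -> INR (p / q) <= INR p / INR q < INR (p / q) + 1.
Proof.
  intros Hq. pose proof (Nat.div_mod p q ltac:(lia)). pose proof (Nat.mod_upper_bound p q ltac:(lia)).
  assert (Hq' : 0 < INR q) by (apply lt_0_INR; auto).
  assert (INR p = INR q * INR (p / q) + INR (p mod q)) by (rewrite H at 1; rewrite plus_INR, mult_INR; auto).
  assert (INR (p mod q) < INR q) by (apply lt_INR; auto). pose proof (pos_INR (p mod q)).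
  split.
  - apply Rmult_le_reg_r with (INR q); auto. unfold Rdiv. rewrite Rmult_assoc, Rinv_l by lra. nra.
  - apply Rmult_lt_reg_r with (INR q); auto. unfold Rdiv. rewrite Rmult_assoc, Rinv_l by lra. nra.
Qed.

Lemma round_err a b c E : (0 < E)%nat ->
  Rabs ((INR ((a - b) * E / S c) - INR ((b - a) * E / S c)) / INR E - (INR a - INR b) / INR (S c)) <= / INR E.
Proof.
  intros HE. assert (HE' : 0 < INR E) by (apply lt_0_INR; auto).
  assert (Hc : 0 < INR (S c)) by (apply lt_0_INR; lia).
  destruct (Nat.le_gt_cases b a).
  - replace (b - a)%nat with 0%nat by lia. rewrite Nat.mul_0_l, Nat.Div0.div_0_l. change (INR 0) with 0.
    pose proof (div_floor ((a - b) * E) (S c) ltac:(lia)) as [H1 H2].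
    rewrite mult_INR, minus_INR in H1, H2 by lia.
    set (z := INR ((a - b) * E / S c)) in *.
    assert (Hz : (z - 0) / INR E - (INR a - INR b) / INR (S c) = (z - (INR a - INR b) * INR E / INR (S c)) / INR E) by (field; lra).
    rewrite Hz. unfold Rdiv at 1. rewrite Rabs_mult, Rabs_inv, (Rabs_right (INR E)) by lra.
    rewrite <- (Rmult_1_l (/ INR E)) at 2. apply Rmult_le_compat_r. left; apply Rinv_0_lt_compat; auto.
    apply Rabs_le. unfold Rdiv in *. lra.
  - replace (a - b)%nat with 0%nat by lia. rewrite Nat.mul_0_l, Nat.Div0.div_0_l. change (INR 0) with 0.
    pose proof (div_floor ((b - a) * E) (S c) ltac:(lia)) as [H1 H2].
    rewrite mult_INR, minus_INR in H1, H2 by lia.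
    set (z := INR ((b - a) * E / S c)) in *.
    assert (Hz : (0 - z) / INR E - (INR a - INR b) / INR (S c) = - ((z - (INR b - INR a) * INR E / INR (S c)) / INR E)) by (field; lra).
    rewrite Hz, Rabs_Ropp. unfold Rdiv at 1. rewrite Rabs_mult, Rabs_inv, (Rabs_right (INR E)) by lra.
    rewrite <- (Rmult_1_l (/ INR E)) at 2. apply Rmult_le_compat_r. left; apply Rinv_0_lt_compat; auto.
    apply Rabs_le. unfold Rdiv in *. lra.
Qed.

Lemma rat_code_split v : rat_of_code v = (INR (ca v) - INR (cb v)) / INR (S (cc v)).
Proof. unfold rat_of_code, ca, cb, cc. destruct (unpair v) as [a r]. cbn [fst snd]. destruct (unpair r) as [b c]. reflexivity. Qed.

Lemma wk_err Phi n d e k : Rabs (wk Phi n d e k - rat_of_code (vk Phi n k d)) <= / 2 ^ e.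
Proof.
  unfold wk, zp, zq. cbv zeta. rewrite rat_code_split. rewrite <- INR_pow2.
  apply round_err. apply Nat.neq_0_lt_0, Nat.pow_nonzero. lia.
Qed.

Lemma nm_name k d : (k <= 2 ^ d)%nat -> is_name (INR k / 2 ^ d) (nm k d).
Proof.
  intros Hk. assert (Hd : 0 < 2 ^ d) by apply pow2_pos.
  assert (Hk' : INR k <= 2 ^ d) by (rewrite <- INR_pow2; apply le_INR; auto).
  apply floor_name.
  - split. apply Rmult_le_pos; [apply pos_INR| left; apply Rinv_0_lt_compat; auto].
    apply Rmult_le_reg_r with (2 ^ d); auto. unfold Rdiv. rewrite Rmult_assoc, Rinv_l by lra. lra.
  - intros j. unfold nm. pose proof (div_floor (k * 2 ^ j) (2 ^ d) ltac:(apply Nat.neq_0_lt_0, Nat.pow_nonzero; lia)).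
    rewrite mult_INR, !INR_pow2 in H. replace (INR k / 2 ^ d * 2 ^ j) with (INR k * 2 ^ j / 2 ^ d) by (field; lra). lra.
Qed.

End Part13.
Import Part13.

Module Part14.
Import ListNotations.
Open Scope R_scope.

Ltac unf_ex := unfold eadd, esub, emul, epow, ediv, econst, eun1, eun2, epair, etri, eleq, efact, ebinom, epar, evk, eN, eterm.

Lemma ex_of_const c : ex_of (Nat.iter c ESucc EZero) = true.
Proof. induction c; simpl; auto. Qed.

Lemma of_PhiT Phi : oracle_free (PhiT Phi) = true.
Proof.
  unfold PhiT. rewrite of_comp, TT_of by reflexivity. simpl andb. rewrite forallb_app.
  simpl. rewrite ?andb_true_r. generalize (need Phi). intros q. induction q; simpl; auto.
Qed.

Lemma of_ZP Phi : oracle_free (ZP Phi) = true.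
Proof. apply compile_of. unf_ex. cbn [ex_of forallb]. rewrite of_PhiT. reflexivity. Qed.
Lemma of_ZQ Phi : oracle_free (ZQ Phi) = true.
Proof. apply compile_of. unf_ex. cbn [ex_of forallb]. rewrite of_PhiT. reflexivity. Qed.
Lemma of_COEF Phi flag : oracle_free (COEF Phi flag) = true.
Proof. apply compile_of. unfold eterm. destruct flag; unf_ex; cbn [ex_of forallb]; rewrite ?of_ZP, ?of_ZQ; reflexivity. Qed.
Lemma of_CODE Phi : oracle_free (CODE Phi) = true.
Proof. apply compile_of. unf_ex. cbn [ex_of forallb]. rewrite !of_COEF. reflexivity. Qed.
Lemma of_LIST Phi : oracle_free (LIST Phi) = true.
Proof. apply compile_of. unf_ex. cbn [ex_of forallb]. rewrite of_CODE. reflexivity. Qed.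
Lemma of_TOP Phi c0 : oracle_free (TOP Phi c0) = true.
Proof. unfold TOP. apply compile_of. unf_ex. cbn [ex_of forallb]. rewrite of_LIST, M_of, !ex_of_const. reflexivity. Qed.

Lemma final_arith (C0 B n : nat) (t : R) :
  t = (INR C0 + 2) / (2 * (2 ^ (2 * B + 4) * 2 ^ n * 2 ^ (C0 + 1)) * (/ 2 ^ (B + 2)) ^ 2) ->
  2 / 2 ^ n + / 2 ^ n + 4 / 2 ^ n + t <= 8 / 2 ^ n.
Proof.
  intros Ht.
  assert (HP : 0 < 2 ^ (2 * B + 4)) by apply pow2_pos.
  assert (HQ : 0 < 2 ^ n) by apply pow2_pos.
  assert (HR : 0 < 2 ^ (C0 + 1)) by apply pow2_pos.
  assert (E2 : (/ 2 ^ (B + 2)) ^ 2 = / 2 ^ (2 * B + 4)).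
  { rewrite pow_inv, <- pow_mult. f_equal. f_equal. lia. }
  rewrite E2 in Ht.
  assert (Hc : INR C0 + 2 <= 2 * 2 ^ (C0 + 1)).
  { pose proof (pow_ge (C0 + 2)). apply le_INR in H. rewrite INR_pow2, plus_INR in H.
    replace (2 ^ (C0 + 2)) with (2 * 2 ^ (C0 + 1)) in H by (rewrite !pow_add; simpl; ring). simpl in H. lra. }
  assert (Ht' : t = (INR C0 + 2) / (2 * 2 ^ n * 2 ^ (C0 + 1))) by (rewrite Ht; field; lra).
  assert (t <= / 2 ^ n).
  { rewrite Ht'. apply Rmult_le_reg_r with (2 * 2 ^ n * 2 ^ (C0 + 1)). nra.
    unfold Rdiv. rewrite Rmult_assoc, Rinv_l by nra. replace (/ 2 ^ n * (2 * 2 ^ n * 2 ^ (C0 + 1))) with (2 * 2 ^ (C0 + 1)) by (field; lra). lra. }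
  assert (forall c, c / 2 ^ n = c * / 2 ^ n) by (intros; unfold Rdiv; ring).
  rewrite !H0. lra.
Qed.

Theorem main_aux (f : R -> R) :
  punctually_computable f -> uniformly_punctually_computable f.
Proof.
  intros [Phi HP]. assert (H : HPhi f Phi) by exact HP. clear HP.
  set (C0 := Bn Phi 0). set (c0 := (C0 + 9)%nat).
  exists (TOP Phi c0). split; [apply of_TOP|].
  intros i. exists (/ 2 ^ (i + 1)). split.
  { apply Rinv_lt_contravar. apply Rmult_lt_0_compat; apply pow2_pos.
    rewrite pow_add. pose proof (pow2_pos i). simpl. lra. }
  intros x Hx.
  change (pr_eval (fun _ => 0%nat) (TOP Phi c0) [i]) with (pr_eval o0 (TOP Phi c0) [i]).
  rewrite TOP_sem, rl_lcode, map_map.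
  set (n := (i + 4)%nat). set (d := dd Phi c0 i). set (N := (2 ^ d)%nat).
  rewrite poly_eval_seq.
  rewrite (sumR_ext _ (fun m => cf N (wk Phi n d n) m * x ^ m)) by (intros; simpl; rewrite <- cf_code; reflexivity).
  rewrite poly_bern. rewrite Rabs_minus_sym.
  assert (HN : INR N = 2 ^ d) by apply INR_pow2.
  set (B := Bn Phi n).
  assert (HkN : forall k, (k <= N)%nat -> 0 <= INR k / INR N <= 1).
  { intros k Hk. assert (0 < INR N) by (rewrite HN; apply pow2_pos). apply le_INR in Hk. split.
    apply Rmult_le_pos; [apply pos_INR| left; apply Rinv_0_lt_compat; auto].
    apply Rmult_le_reg_r with (INR N); auto. unfold Rdiv. rewrite Rmult_assoc, Rinv_l by lra. lra. }
  eapply Rle_trans.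
  apply (bernstein_approx f (wk Phi n d n) N x (4 / 2 ^ n) (/ 2 ^ (B + 2)) (2 / 2 ^ n + / 2 ^ n) (INR C0 + 2)).
  - unfold N. pose proof (Nat.pow_nonzero 2 d). lia.
  - auto.
  - apply Rinv_0_lt_compat, pow2_pos.
  - unfold Rdiv. apply Rmult_le_pos; [lra| left; apply Rinv_0_lt_compat, pow2_pos].
  - intros k Hk. rewrite HN.
    pose proof (wk_err Phi n d n k). pose proof (nm_name k d Hk).
    assert (0 <= INR k / 2 ^ d <= 1) by (rewrite <- HN; auto).
    pose proof (out_err f Phi _ _ n H H2 H1). unfold vk in H0.
    set (w := wk Phi n d n k) in *. set (q := rat_of_code _) in *. clearbody w q.
    unfold Rabs in *. repeat destruct Rcase_abs; lra.
  - intros k Hk Hd. apply (modulus f Phi); auto.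
  - intros k Hk. pose proof (f_bound f Phi (INR k / INR N) H (HkN k Hk)). pose proof (f_bound f Phi x H Hx).
    fold C0 in H0, H1. set (a := f (INR k / INR N)) in *. set (b := f x) in *. clearbody a b.
    unfold Rabs in *. repeat destruct Rcase_abs; lra.
  - assert (E : INR N = 2 ^ (2 * B + 4) * 2 ^ n * 2 ^ (C0 + 1)).
    { rewrite HN, <- !pow_add. f_equal. unfold d, dd, c0, B, Bn, n. lia. }
    replace (/ 2 ^ (i + 1)) with (8 / 2 ^ n) by (unfold n; rewrite !pow_add; simpl; field; apply pow_nonzero; lra).
    rewrite E. apply (final_arith C0 B n). reflexivity.
Qed.

End Part14.
Import Part14.

Theorem mainTheorem7 (f : R -> R) :
  punctually_computable f -> uniformly_punctually_computable f.
Proof. exact (main_aux f). Qed.
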